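(* If $\mathcal{A}$ is a strong $T_0$-family, then every nonseparable closed linear subspace of $\mathcal{X}_\mathcal{A}$ contains a subspace isomorphic to $\ell_2$.
   Context: $c_{00}(\omega_1)$ is the set of finitely supported $x\in\mathbb{R}^{\omega_1}$; $\|x\|_\mathcal{A}=\sup_{A\in\mathcal{A}}\sqrt{\sum_{\alpha\in A}x(\alpha)^2}$ and $\mathcal{X}_\mathcal{A}$ is the closure of $c_{00}(\omega_1)$ in $\{x\in\mathbb{R}^{\omega_1}:\|x\|_\mathcal{A}<\infty\}$. For disjoint $A,B$, $A\otimes B=\{\{\alpha,\beta\}:\alpha\in A,\beta\in B\}$. A function $c=(c_0,c_1):[\omega_1]^2\to I\times J$ ($0,1\in I$, $J\ne\emptyset$) is a $T$-coloring if for every uncountable pairwise disjoint family $\{\{a_\xi(0),a_\xi(1)\}:\xi<\omega_1\}$ of pairs and all $(i_0,j_0),(i_1,j_1)\in I\times J$ there are $\xi<\eta$ with $c(\{a_\xi(0),a_\eta(0)\})=(i_0,j_0)$, $c(\{a_\xi(1),a_\eta(1)\})=(i_1,j_1)$; it is a strong $T$-coloring if moreover for every uncountable pairwise disjoint family $\{A_\xi:\xi<\omega_1\}$ of finite subsets of $\omega_1$ there are $\xi<\eta$ with $c_0[A_\xi\otimes A_\eta]=\{0\}$ and $\xi<\eta$ with $c_0[A_\xi\otimes A_\eta]=\{1\}$. A strong $T_0$-family is $\mathcal{A}_c=\{a\subseteq\omega_1\text{ finite}:c_0[[a]^2]\subseteq\{0\}\}$ for a strong $T$-coloring $c$. *)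

(* Defs.v *)
From Stdlib Require Import Reals List.
From Coquelicot Require Import Coquelicot.
Open Scope R_scope.

Definition countable_on {W : Type} (P : W -> Prop) : Prop :=
  exists f : W -> nat, forall x y, P x -> P y -> f x = f y -> x = y.

Definition is_omega1 (W : Type) (lt : W -> W -> Prop) : Prop :=
  (forall x, ~ lt x x) /\
  (forall x y z, lt x y -> lt y z -> lt x z) /\
  (forall x y, lt x y \/ x = y \/ lt y x) /\
  well_founded lt /\
  ~ countable_on (fun _ : W => True) /\
  (forall x, countable_on (fun y => lt y x)).

(* ---------- colorings ----------
   A coloring of [W]^2 is represented by a symmetric c : W -> W -> I * J
   (values on the diagonal are irrelevant). *)
Definition sym_coloring {W I J : Type} (c : W -> W -> I * J) : Prop :=
  forall a b, c a b = c b a.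

Definition T_coloring {W I J : Type} (lt : W -> W -> Prop)
  (c : W -> W -> I * J) : Prop :=
  forall a0 a1 : W -> W,
    (forall xi, a0 xi <> a1 xi) ->
    (forall xi eta, xi <> eta ->
       a0 xi <> a0 eta /\ a0 xi <> a1 eta /\ a1 xi <> a0 eta /\ a1 xi <> a1 eta) ->
    forall p0 p1 : I * J,
      exists xi eta, lt xi eta /\ c (a0 xi) (a0 eta) = p0 /\ c (a1 xi) (a1 eta) = p1.

Definition c0_const_on {W I J : Type} (c : W -> W -> I * J)
  (A B : list W) (i : I) : Prop :=
  forall a b, In a A -> In b B -> fst (c a b) = i.

Definition strong_T_coloring {W I J : Type} (lt : W -> W -> Prop)
  (i0 i1 : I) (c : W -> W -> I * J) : Prop :=
  T_coloring lt c /\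
  forall A : W -> list W,
    (forall xi, A xi <> nil) ->
    (forall xi eta, xi <> eta -> forall a, In a (A xi) -> ~ In a (A eta)) ->
    (exists xi eta, lt xi eta /\ c0_const_on c (A xi) (A eta) i0) /\
    (exists xi eta, lt xi eta /\ c0_const_on c (A xi) (A eta) i1).

(* The strong T_0-family A_c: finite sets (duplicate-free lists) a with
   c_0[[a]^2] subset {0}. *)
Definition T0_family {W I J : Type} (i0 : I) (c : W -> W -> I * J)
  (a : list W) : Prop :=
  NoDup a /\
  forall x y, In x a -> In y a -> x <> y -> fst (c x y) = i0.

Definition sqsum {W : Type} (x : W -> R) (a : list W) : R :=
  fold_right (fun w acc => x w ^ 2 + acc) 0 a.

Definition normA_bar {W : Type} (fam : list W -> Prop) (x : W -> R) : Rbar :=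
  Lub_Rbar (fun r => exists a, fam a /\ r = sqrt (sqsum x a)).

Definition normA {W : Type} (fam : list W -> Prop) (x : W -> R) : R :=
  real (normA_bar fam x).

Definition vsub {W : Type} (x y : W -> R) : W -> R := fun w => x w - y w.

Definition fin_supp {W : Type} (z : W -> R) : Prop :=
  exists s : list W, forall w, ~ In w s -> z w = 0.

(* X_A: closure of c_00 in {x : ||x||_A < oo} *)
Definition in_XA {W : Type} (fam : list W -> Prop) (x : W -> R) : Prop :=
  is_finite (normA_bar fam x) /\
  forall eps, 0 < eps ->
    exists z, fin_supp z /\ normA fam (vsub x z) < eps.

Definition closed_subspace {W : Type} (fam : list W -> Prop)
  (Y : (W -> R) -> Prop) : Prop :=
  (forall y, Y y -> in_XA fam y) /\
  Y (fun _ => 0) /\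
  (forall y z, Y y -> Y z -> Y (fun w => y w + z w)) /\
  (forall (r : R) y, Y y -> Y (fun w => r * y w)) /\
  (forall x, in_XA fam x ->
     (forall eps, 0 < eps -> exists y, Y y /\ normA fam (vsub x y) < eps) ->
     Y x).

Definition separable_sub {W : Type} (fam : list W -> Prop)
  (Y : (W -> R) -> Prop) : Prop :=
  exists d : nat -> (W -> R),
    (forall n, Y (d n)) /\
    forall y, Y y -> forall eps, 0 < eps ->
      exists n, normA fam (vsub y (d n)) < eps.

Definition in_l2 (u : nat -> R) : Prop := ex_series (fun n => u n ^ 2).
Definition norm2 (u : nat -> R) : R := sqrt (Series (fun n => u n ^ 2)).

Definition contains_l2 {W : Type} (fam : list W -> Prop)
  (Y : (W -> R) -> Prop) : Prop :=
  exists L : (nat -> R) -> (W -> R),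
    (forall u, in_l2 u -> Y (L u)) /\
    (forall u v, in_l2 u -> in_l2 v ->
       forall w, L (fun n => u n + v n) w = L u w + L v w) /\
    (forall (r : R) u, in_l2 u -> forall w, L (fun n => r * u n) w = r * L u w) /\
    exists a b, 0 < a /\ 0 < b /\
      forall u, in_l2 u ->
        a * norm2 u <= normA fam (L u) /\ normA fam (L u) <= b * norm2 u.

(* Main.v *)
Require Import Defs.
From Stdlib Require Import Reals List Lra Lia Psatz Classical ClassicalEpsilon FunctionalExtensionality Cantor ZArith.
From Coquelicot Require Import Coquelicot.
Open Scope R_scope.

Section SQ.
Context {W : Type}.
Implicit Types (x y t : W -> R) (a : list W) (w : W).

Definition dot (x y : W -> R) (a : list W) : R :=
  fold_right (fun w acc => x w * y w + acc) 0 a.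

Lemma sqsum_cons x b a : sqsum x (b :: a) = x b ^ 2 + sqsum x a.
Proof. reflexivity. Qed.
Lemma sqsum_nil x : sqsum x nil = 0.
Proof. reflexivity. Qed.
Lemma dot_cons x y b a : dot x y (b :: a) = x b * y b + dot x y a.
Proof. reflexivity. Qed.

Definition nu (x : W -> R) (a : list W) : R := sqrt (sqsum x a).

Lemma sqsum_nonneg x a : 0 <= sqsum x a.
Proof. induction a as [|w a IH]; [simpl; lra|]. rewrite sqsum_cons. pose proof (pow2_ge_0 (x w)). lra. Qed.

Lemma sqsum_add_sq x y t a : (forall w, In w a -> x w ^ 2 = y w ^ 2 + t w ^ 2) ->
  sqsum x a = sqsum y a + sqsum t a.
Proof.
  induction a as [|b a IH]; intros H ; rewrite ?sqsum_cons, ?sqsum_nil, ?dot_cons; [lra|].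
  rewrite H by (left; auto). rewrite IH by (intros; apply H; right; auto). ring.
Qed.

Lemma sqsum_ext x y a : (forall w, In w a -> x w ^ 2 = y w ^ 2) -> sqsum x a = sqsum y a.
Proof.
  intros H. rewrite (sqsum_add_sq x y (fun _ => 0) a).
  - assert (sqsum (fun _ : W => 0) a = 0) as ->; [|ring].
    clear H. induction a as [|b a IH]; [reflexivity|]. rewrite sqsum_cons, IH. ring.
  - intros w Hw. rewrite H; auto. ring.
Qed.

Lemma sqsum_mono x y a : (forall w, In w a -> x w ^ 2 <= y w ^ 2) -> sqsum x a <= sqsum y a.
Proof.
  induction a as [|b a IH]; intros H ; rewrite ?sqsum_cons, ?sqsum_nil, ?dot_cons; [lra|].
  pose proof (H b (or_introl eq_refl)). pose proof (IH (fun w Hw => H w (or_intror Hw))). lra.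
Qed.

Lemma sqsum_scal r x a : sqsum (fun w => r * x w) a = r ^ 2 * sqsum x a.
Proof. induction a as [|w a IH]; [simpl; ring|]. simpl app. rewrite !sqsum_cons, IH. ring. Qed.

Lemma sqsum_app x a (b : list W) : sqsum x (a ++ b) = sqsum x a + sqsum x b.
Proof. induction a as [|w a IH]; [simpl; ring|]. simpl app. rewrite ?sqsum_cons, ?dot_cons, IH. ring. Qed.


Lemma sqsum_lin x y (t : R) a :
  sqsum (fun w => x w + t * y w) a = sqsum x a + 2 * t * dot x y a + t ^ 2 * sqsum y a.
Proof. induction a as [|w a IH]; [simpl; ring|]. simpl app. rewrite ?sqsum_cons, ?dot_cons, IH. ring. Qed.

Lemma CS x y a : dot x y a ^ 2 <= sqsum x a * sqsum y a.
Proof.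
  set (A := sqsum x a). set (B := dot x y a). set (C := sqsum y a).
  assert (H : forall t : R, 0 <= A + 2 * t * B + t ^ 2 * C).
  { intros t. unfold A, B, C. rewrite <- sqsum_lin. apply sqsum_nonneg. }
  assert (HA : 0 <= A) by apply sqsum_nonneg.
  assert (HC : 0 <= C) by apply sqsum_nonneg.
  destruct (Req_dec C 0) as [C0|Cpos].
  - destruct (Req_dec B 0) as [B0|Bn].
    + rewrite B0, C0. lra.
    + exfalso. specialize (H (- (A + 1) / (2 * B))).
      assert (E : 2 * (- (A + 1) / (2 * B)) * B = - (A + 1)) by (field; auto).
      rewrite E, C0 in H. lra.
  - set (t := B / C).
    assert (Bt : B = t * C) by (unfold t; field; auto).
    specialize (H (- t)). rewrite Bt in H |- *. nra.
Qed.

Lemma sqrt_le_sq X Y : 0 <= Y -> X <= Y ^ 2 -> sqrt X <= Y.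
Proof.
  intros HY HX. destruct (Rle_lt_dec X 0) as [Hn|Hp].
  - rewrite sqrt_neg_0; auto.
  - rewrite <- (sqrt_pow2 Y HY). apply sqrt_le_1; try lra.
Qed.

Lemma nu_nonneg x a : 0 <= nu x a.
Proof. apply sqrt_pos. Qed.

Lemma nu_sq x a : nu x a ^ 2 = sqsum x a.
Proof. unfold nu. rewrite <- Rsqr_pow2. apply Rsqr_sqrt. apply sqsum_nonneg. Qed.

Lemma nu_plus x y a : nu (fun w => x w + y w) a <= nu x a + nu y a.
Proof.
  unfold nu. apply sqrt_le_sq.
  - pose proof (sqrt_pos (sqsum x a)). pose proof (sqrt_pos (sqsum y a)). lra.
  - assert (E : sqsum (fun w => x w + y w) a = sqsum (fun w => x w + 1 * y w) a).
    { apply sqsum_ext. intros. ring. }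
    rewrite E, sqsum_lin.
    pose proof (CS x y a) as Hcs.
    pose proof (sqsum_nonneg x a). pose proof (sqsum_nonneg y a).
    pose proof (sqrt_pos (sqsum x a)) as P1. pose proof (sqrt_pos (sqsum y a)) as P2.
    pose proof (nu_sq x a) as Q1. pose proof (nu_sq y a) as Q2. unfold nu in Q1, Q2.
    set (sA := sqrt (sqsum x a)) in *. set (sC := sqrt (sqsum y a)) in *.
    set (B := dot x y a) in *.
    assert (B <= sA * sC).
    { assert (B ^ 2 <= (sA * sC) ^ 2) by (rewrite Rpow_mult_distr, Q1, Q2; auto).
      assert (0 <= sA * sC) by (apply Rmult_le_pos; auto). nra. }
    rewrite <- Q1, <- Q2. nra.
Qed.

Lemma nu_scal r x a : nu (fun w => r * x w) a = Rabs r * nu x a.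
Proof.
  unfold nu. rewrite sqsum_scal. rewrite sqrt_mult_alt by apply pow2_ge_0.
  rewrite <- Rsqr_pow2, sqrt_Rsqr_abs. auto.
Qed.

Lemma nu_mono x y a : (forall w, In w a -> Rabs (x w) <= Rabs (y w)) -> nu x a <= nu y a.
Proof.
  intros H. unfold nu. apply sqrt_le_1_alt. apply sqsum_mono. intros w Hw.
  specialize (H w Hw). rewrite <- !Rsqr_pow2. rewrite (Rsqr_abs (x w)), (Rsqr_abs (y w)).
  apply Rsqr_incr_1; auto; apply Rabs_pos.
Qed.

Lemma nu_ext x y a : (forall w, In w a -> x w = y w) -> nu x a = nu y a.
Proof. intros H. unfold nu. f_equal. apply sqsum_ext. intros w Hw. rewrite H; auto. Qed.

Lemma nu_single x w : nu x (w :: nil) = Rabs (x w).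
Proof. unfold nu. rewrite sqsum_cons, sqsum_nil, Rplus_0_r, <- Rsqr_pow2. apply sqrt_Rsqr_abs. Qed.

Lemma nu_nil x : nu x nil = 0.
Proof. unfold nu. simpl. apply sqrt_0. Qed.

Lemma nu_minus x y a : nu x a <= nu y a + nu (fun w => x w - y w) a.
Proof.
  rewrite (nu_ext x (fun w => y w + (x w - y w))) by (intros; ring). apply nu_plus.
Qed.

End SQ.

Section NORM.
Context {W : Type} (fam : list W -> Prop) (famnil : fam nil).
Implicit Types (x y : W -> R) (a : list W) (w : W).

Definition Fin x := is_finite (normA_bar fam x).

Lemma bnd_fin x M : (forall a, fam a -> nu x a <= M) ->
  Fin x /\ 0 <= normA fam x /\ normA fam x <= M.
Proof.
  intros H. unfold Fin, normA, normA_bar.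
  destruct (Lub_Rbar_correct (fun r => exists a, fam a /\ r = sqrt (sqsum x a))) as [ub lub].
  assert (H1 : Rbar_le (Lub_Rbar (fun r => exists a, fam a /\ r = sqrt (sqsum x a))) M).
  { apply lub. intros r [a [Ha ->]]. simpl. apply H. auto. }
  assert (H2 : Rbar_le 0 (Lub_Rbar (fun r => exists a, fam a /\ r = sqrt (sqsum x a)))).
  { apply ub. exists nil. split; auto. simpl. rewrite sqrt_0. auto. }
  destruct (Lub_Rbar _) as [r| |]; simpl in *; try contradiction.
  split; [reflexivity|]. lra.
Qed.

Lemma fin_le x a : Fin x -> fam a -> nu x a <= normA fam x.
Proof.
  intros Hf Ha. unfold Fin, normA, normA_bar in *.
  destruct (Lub_Rbar_correct (fun r => exists a, fam a /\ r = sqrt (sqsum x a))) as [ub lub].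
  specialize (ub (nu x a) (ex_intro _ a (conj Ha eq_refl))).
  destruct (Lub_Rbar _) as [r| |]; simpl in *; try contradiction; try discriminate. auto.
Qed.

Lemma fin_nonneg x : Fin x -> 0 <= normA fam x.
Proof. intros Hf. pose proof (fin_le x nil Hf famnil). rewrite nu_nil in H. auto. Qed.

Lemma fin_approx x eps : Fin x -> 0 < eps -> exists a, fam a /\ normA fam x - eps < nu x a.
Proof.
  intros Hf He. apply NNPP. intros Hn.
  assert (Hall : forall a, fam a -> nu x a <= normA fam x - eps).
  { intros a Ha. apply Rnot_lt_le. intros Hl. apply Hn. exists a. split; auto. }
  unfold Fin, normA, normA_bar in *.
  destruct (Lub_Rbar_correct (fun r => exists a, fam a /\ r = sqrt (sqsum x a))) as [ub lub].
  assert (H1 : Rbar_le (Lub_Rbar (fun r => exists a, fam a /\ r = sqrt (sqsum x a)))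
                       (real (Lub_Rbar (fun r => exists a, fam a /\ r = sqrt (sqsum x a))) - eps)).
  { apply lub. intros r [a [Ha ->]]. simpl. apply Hall. auto. }
  destruct (Lub_Rbar _) as [r| |]; simpl in *; try contradiction; try discriminate. lra.
Qed.

Lemma fin_bound x M : Fin x -> (forall a, fam a -> nu x a <= M) -> normA fam x <= M.
Proof. intros _ H. apply (bnd_fin x M H). Qed.

Lemma fin_plus x y : Fin x -> Fin y -> Fin (fun w => x w + y w) /\
  normA fam (fun w => x w + y w) <= normA fam x + normA fam y.
Proof.
  intros Hx Hy. destruct (bnd_fin (fun w => x w + y w) (normA fam x + normA fam y)) as [A [B C]].
  - intros a Ha. eapply Rle_trans; [apply nu_plus|]. apply Rplus_le_compat; apply fin_le; auto.
  - auto.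
Qed.

Lemma fin_mono x y : Fin y -> (forall w, Rabs (x w) <= Rabs (y w)) -> Fin x /\ normA fam x <= normA fam y.
Proof.
  intros Hy H. destruct (bnd_fin x (normA fam y)) as [A [B C]]; auto.
  intros a Ha. eapply Rle_trans; [apply nu_mono|]. intros; apply H. apply fin_le; auto.
Qed.

Lemma fin_scal r x : Fin x -> Fin (fun w => r * x w) /\ normA fam (fun w => r * x w) = Rabs r * normA fam x.
Proof.
  intros Hx. destruct (bnd_fin (fun w => r * x w) (Rabs r * normA fam x)) as [A [B C]].
  - intros a Ha. rewrite nu_scal. apply Rmult_le_compat_l; [apply Rabs_pos|]. apply fin_le; auto.
  - split; auto. apply Rle_antisym; auto.
    destruct (Req_dec r 0) as [r0|rn].
    + subst r. rewrite Rabs_R0. lra.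
    + apply Rnot_lt_le. intros Hl.
      set (eps := (Rabs r * normA fam x - normA fam (fun w => r * x w)) / Rabs r).
      assert (Hr : 0 < Rabs r) by (apply Rabs_pos_lt; auto).
      assert (He : 0 < eps) by (unfold eps; apply Rdiv_lt_0_compat; lra).
      destruct (fin_approx x eps Hx He) as [a [Ha Hlt]].
      pose proof (fin_le _ a A Ha) as Hle. rewrite nu_scal in Hle.
      assert (Rabs r * (normA fam x - eps) < Rabs r * nu x a) by (apply Rmult_lt_compat_l; auto).
      assert (Rabs r * eps = Rabs r * normA fam x - normA fam (fun w => r * x w)) by (unfold eps; field; lra).
      nra.
Qed.

Lemma fin_point x w : Fin x -> fam (w :: nil) -> Rabs (x w) <= normA fam x.
Proof. intros Hx Hw. rewrite <- nu_single. apply fin_le; auto. Qed.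

End NORM.

Lemma to_nat_inj p q : to_nat p = to_nat q -> p = q.
Proof. intros H. rewrite <- (cancel_of_to p), <- (cancel_of_to q), H. auto. Qed.

Lemma cnt_sub {X} (P Q : X -> Prop) : countable_on P -> (forall x, Q x -> P x) -> countable_on Q.
Proof. intros [f Hf] H. exists f. intros x y Hx Hy. apply Hf; auto. Qed.

Lemma cnt_single {X} (a : X) : countable_on (fun x => x = a).
Proof. exists (fun _ => 0%nat). intros x y -> ->. auto. Qed.

Lemma cnt_nat (P : nat -> Prop) : countable_on P.
Proof. exists (fun n => n). auto. Qed.

Lemma cnt_Union {X Y} (P : X -> Prop) (Q : X -> Y -> Prop) :
  countable_on P -> (forall x, P x -> countable_on (Q x)) ->
  countable_on (fun y => exists x, P x /\ Q x y).
Proof.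
  intros [f Hf] HQ.
  set (g := fun x => epsilon (inhabits (fun _ : Y => 0%nat))
            (fun g => forall y y', Q x y -> Q x y' -> g y = g y' -> y = y')).
  assert (Hg : forall x, P x -> forall y y', Q x y -> Q x y' -> g x y = g x y' -> y = y').
  { intros x Px. unfold g. apply (epsilon_spec (inhabits (fun _ : Y => 0%nat))
      (fun g => forall y y', Q x y -> Q x y' -> g y = g y' -> y = y')). apply HQ; auto. }
  exists (fun y => match excluded_middle_informative (exists x, P x /\ Q x y) with
                   | left H => let x := proj1_sig (constructive_indefinite_description _ H) in
                               to_nat (f x, g x y)
                   | right _ => 0%nat end).
  intros y y' Hy Hy'.
  destruct (excluded_middle_informative (exists x, P x /\ Q x y)) as [H|H]; [|contradiction].
  destruct (excluded_middle_informative (exists x, P x /\ Q x y')) as [H'|H']; [|contradiction].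
  destruct (constructive_indefinite_description _ H) as [x [Px Qx]].
  destruct (constructive_indefinite_description _ H') as [x' [Px' Qx']].
  intros E. apply to_nat_inj in E. simpl in E. injection E as E1 E2.
  assert (x = x') by (apply Hf; auto). subst x'.
  eapply Hg; eauto.
Qed.

Lemma cnt_union2 {X} (P Q : X -> Prop) : countable_on P -> countable_on Q ->
  countable_on (fun x => P x \/ Q x).
Proof.
  intros HP HQ.
  apply (cnt_sub (fun y => exists b : bool, True /\ (if b then P y else Q y))).
  - apply cnt_Union.
    + exists (fun b : bool => if b then 1%nat else 0%nat). intros [|] [|] _ _ E; auto; discriminate.
    + intros [|] _; auto.
  - intros x [Hx|Hx]; [exists true|exists false]; auto.
Qed.

Lemma cnt_list {X} (l : list X) : countable_on (fun x => In x l).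
Proof.
  induction l as [|b l IH].
  - exists (fun _ => 0%nat). intros x y [].
  - apply (cnt_sub (fun x => x = b \/ In x l)).
    + apply cnt_union2; auto. apply cnt_single.
    + intros x [H|H]; auto.
Qed.

Lemma uncnt_avoid {X} (U C : X -> Prop) : ~ countable_on U -> countable_on C ->
  exists u, U u /\ ~ C u.
Proof.
  intros HU HC. apply NNPP. intros Hn. apply HU. apply (cnt_sub C); auto.
  intros x Ux. apply NNPP. intros Cn. apply Hn. exists x. auto.
Qed.

Lemma pigeon {X} (V : X -> Prop) (K : X -> nat) : ~ countable_on V ->
  exists m, ~ countable_on (fun x => V x /\ K x = m).
Proof.
  intros HV. apply NNPP. intros Hn. apply HV.
  apply (cnt_sub (fun x => exists m, True /\ (V x /\ K x = m))).
  - apply cnt_Union; [apply cnt_nat|]. intros m _. apply NNPP. intros Hm. apply Hn. exists m. auto.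
  - intros x Vx. exists (K x). auto.
Qed.

Lemma wf_rec_exists {X T} (lt : X -> X -> Prop) (wf : well_founded lt) (t0 : T)
  (Rl : X -> (X -> T) -> T -> Prop) :
  (forall x h h' t, (forall y, lt y x -> h y = h' y) -> Rl x h t -> Rl x h' t) ->
  (forall x h, exists t, Rl x h t) -> exists g : X -> T, forall x, Rl x g (g x).
Proof.
  intros Hinv Hex.
  set (ext := fun x (f : forall y, lt y x -> T) (y : X) =>
                match excluded_middle_informative (lt y x) with
                | left p => f y p | right _ => t0 end).
  set (F := fun x (f : forall y, lt y x -> T) =>
              proj1_sig (constructive_indefinite_description _ (Hex x (ext x f)))).
  set (g := Fix wf (fun _ => T) F).
  exists g. intros x.
  assert (Eq : g x = F x (fun y _ => g y)).
  { unfold g. refine (Fix_eq wf (fun _ => T) F _ x). intros z f f' Hff.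
    assert (f = f') as ->; auto.
    apply functional_extensionality_dep. intros y. apply functional_extensionality_dep. intros p. auto. }
  rewrite Eq. unfold F.
  destruct (constructive_indefinite_description _ _) as [t Ht]. simpl.
  apply (Hinv x (ext x (fun y _ => g y))); auto.
  intros y Hy. unfold ext. destruct (excluded_middle_informative (lt y x)); [auto|contradiction].
Qed.

Lemma seq_choice {T} (Q : list T -> T -> Prop) :
  (forall l, exists t, Q l t) -> exists f : nat -> T, forall k, Q (map f (seq 0 k)) (f k).
Proof.
  intros H.
  set (nxt := fun l => proj1_sig (constructive_indefinite_description _ (H l))).
  assert (Hn : forall l, Q l (nxt l)) by (intros l; unfold nxt; destruct (constructive_indefinite_description _ _); auto).
  set (build := fix build (n : nat) : list T := match n with O => nil | S n => build n ++ (nxt (build n) :: nil) end).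
  exists (fun k => nxt (build k)).
  intros k. assert (E : build k = map (fun k => nxt (build k)) (seq 0 k)).
  { induction k as [|k IH]; auto. rewrite seq_S, map_app. simpl. rewrite <- IH. auto. }
  rewrite <- E. auto.
Qed.

Definition surj (T : Type) := exists e : nat -> T, forall t, exists n, e n = t.

Lemma surj_nat : surj nat.
Proof. exists (fun n => n). intros t. exists t. auto. Qed.

Lemma surj_prod A B : surj A -> surj B -> surj (A * B).
Proof.
  intros [ea Ha] [eb Hb]. exists (fun n => (ea (fst (of_nat n)), eb (snd (of_nat n)))).
  intros [a b]. destruct (Ha a) as [na Ea]. destruct (Hb b) as [nb Eb].
  exists (to_nat (na, nb)). rewrite cancel_of_to. simpl. subst. auto.
Qed.

Fixpoint dlist (fuel n : nat) : list nat :=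
  match fuel with
  | O => nil
  | S f => match n with O => nil | S n' => fst (of_nat n') :: dlist f (snd (of_nat n')) end
  end.
Fixpoint elist (l : list nat) : nat :=
  match l with nil => O | a :: l => S (to_nat (a, elist l)) end.
Lemma dlist_elist l : dlist (length l) (elist l) = l.
Proof. induction l; auto. cbn [length elist dlist]. rewrite cancel_of_to. cbn [fst snd]. rewrite IHl. auto. Qed.

Lemma surj_list A : surj A -> surj (list A).
Proof.
  intros [ea Ha]. exists (fun n => map ea (dlist (fst (of_nat n)) (snd (of_nat n)))).
  intros la. assert (H : exists ln, map ea ln = la).
  { induction la as [|a la IH]. exists nil; auto. destruct IH as [ln E]. destruct (Ha a) as [n En].
    exists (n :: ln). simpl. rewrite E, En. auto. }
  destruct H as [ln E]. exists (to_nat (length ln, elist ln)). rewrite cancel_of_to. simpl.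
  rewrite dlist_elist. auto.
Qed.

Lemma int_approx (v : R) (k : nat) : exists p m : nat,
  Rabs ((INR p - INR m) / (INR k + 1) - v) <= 1 / (INR k + 1).
Proof.
  assert (Hk : 0 < INR k + 1) by (pose proof (pos_INR k); lra).
  set (r := v * (INR k + 1)). destruct (archimed r) as [H1 H2].
  assert (Hz : exists p m : nat, INR p - INR m = IZR (up r)).
  { destruct (Z_le_gt_dec 0 (up r)) as [Hp|Hn].
    - exists (Z.to_nat (up r)), O. rewrite (INR_IZR_INZ (Z.to_nat (up r))), Z2Nat.id by lia. simpl. lra.
    - exists O, (Z.to_nat (- up r)). rewrite (INR_IZR_INZ (Z.to_nat (- up r))), Z2Nat.id by lia. rewrite opp_IZR. simpl. lra. }
  destruct Hz as [p [m E]]. exists p, m. rewrite E.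
  assert (E2 : IZR (up r) / (INR k + 1) - v = (IZR (up r) - r) / (INR k + 1)) by (unfold r; field; lra).
  rewrite E2. unfold Rdiv. rewrite Rabs_mult, Rabs_inv, (Rabs_right (INR k + 1)) by lra.
  apply Rmult_le_compat_r. left. apply Rinv_0_lt_compat; auto.
  rewrite Rabs_right by lra. lra.
Qed.

Section FAM.
Context {W I J : Type} (i0 : I) (c : W -> W -> I * J).
Local Notation fam := (T0_family i0 c).

Lemma fam_nil : fam nil.
Proof. split. constructor. intros x y []. Qed.

Lemma fam_single w : fam (w :: nil).
Proof. split. repeat constructor; auto. intros x y [<-|[]] [<-|[]] H; congruence. Qed.

Lemma fam_filter (p : W -> bool) a : fam a -> fam (filter p a).
Proof.
  intros [Hn Hc]. split. apply NoDup_filter; auto.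
  intros x y Hx Hy. apply filter_In in Hx. apply filter_In in Hy. apply Hc; tauto.
Qed.
End FAM.

Definition rst {W} (S : W -> Prop) (x : W -> R) (w : W) : R :=
  if excluded_middle_informative (S w) then x w else 0.

Lemma rst_abs {W} S (x : W -> R) w : Rabs (rst S x w) <= Rabs (x w).
Proof. unfold rst. destruct excluded_middle_informative; try lra. rewrite Rabs_R0. apply Rabs_pos. Qed.

Lemma rst_sub {W} S (x y : W -> R) w : rst S (fun v => x v - y v) w = rst S x w - rst S y w.
Proof. unfold rst. destruct excluded_middle_informative; lra. Qed.

Lemma rst_scal {W} S r (x : W -> R) w : rst S (fun v => r * x v) w = r * rst S x w.
Proof. unfold rst. destruct excluded_middle_informative; lra. Qed.

Section PT.
Context {W : Type}.
Lemma sqsum_point (b : W) (t : R) a : NoDup a ->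
  sqsum (fun v => if excluded_middle_informative (v = b) then t else 0) a <= t ^ 2.
Proof.
  induction a as [|w a IH]; intros Hn.
  - simpl. pose proof (pow2_ge_0 t). lra.
  - apply NoDup_cons_iff in Hn as [Hw Hn]. rewrite sqsum_cons.
    destruct (excluded_middle_informative (w = b)) as [->|Hne].
    + assert (sqsum (fun v => if excluded_middle_informative (v = b) then t else 0) a = 0) as ->.
      { rewrite (sqsum_ext _ (fun _ => 0)).
        - clear IH Hn Hw. induction a as [|u a IH']; [reflexivity|]. rewrite sqsum_cons, IH'. ring.
        - intros v Hv. destruct excluded_middle_informative; [subst; contradiction|]. auto. }
      lra.
    + specialize (IH Hn). simpl (0 ^ 2). lra.
Qed.

Lemma nu_fin (x : W -> R) a (L : list W) : NoDup a -> NoDup L ->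
  (forall v, ~ In v L -> x v = 0) ->
  nu x a <= fold_right (fun v acc => Rabs (x v) + acc) 0 L.
Proof.
  intros Ha. revert x. induction L as [|b L IH]; intros x HL Hx.
  - simpl. rewrite (nu_ext x (fun v => 0 * x v)). rewrite nu_scal, Rabs_R0. lra.
    intros v _. rewrite Hx; auto. ring.
  - apply NoDup_cons_iff in HL as [Hb HL]. simpl.
    rewrite (nu_ext x (fun v => (if excluded_middle_informative (v = b) then x b else 0) +
                               (if excluded_middle_informative (v = b) then 0 else x v))).
    2:{ intros v _. destruct excluded_middle_informative; subst; ring. }
    eapply Rle_trans; [apply nu_plus|]. apply Rplus_le_compat.
    + unfold nu. apply sqrt_le_sq; [apply Rabs_pos|]. rewrite pow2_abs. apply sqsum_point; auto.
    + eapply Rle_trans; [apply (IH (fun v => if excluded_middle_informative (v = b) then 0 else x v)); auto|].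
      * intros v Hv. destruct excluded_middle_informative; auto. apply Hx. intros [E|E]; auto.
      * right. clear IH Hx. induction L as [|u L IHL]; auto. simpl. rewrite IHL.
        -- destruct excluded_middle_informative; auto. subst. exfalso. apply Hb. left; auto.
        -- intros H. apply Hb. right. auto.
        -- inversion HL; auto.
Qed.
End PT.

Lemma nat_large (r : R) : exists n : nat, r < INR n.
Proof.
  destruct (archimed r) as [H1 H2]. exists (Z.to_nat (up r)).
  destruct (Z_le_gt_dec 0 (up r)).
  - rewrite INR_IZR_INZ, Z2Nat.id by lia. lra.
  - replace (Z.to_nat (up r)) with O by lia. simpl. assert (IZR (up r) <= -1) by (apply IZR_le; lia). lra.
Qed.

Lemma nu_sub {W} (x y : W -> R) a : nu (fun w => x w - y w) a <= nu x a + nu y a.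
Proof.
  rewrite (nu_ext _ (fun w => x w + (-1) * y w)) by (intros; ring).
  eapply Rle_trans; [apply nu_plus|]. rewrite nu_scal. replace (Rabs (-1)) with 1 by (rewrite Rabs_left; lra). lra.
Qed.

Lemma fold_bound {W} (g : W -> R) (L : list W) (B : R) : (forall v, In v L -> g v <= B) ->
  fold_right (fun v acc => g v + acc) 0 L <= INR (length L) * B.
Proof.
  induction L as [|b L IH]; intros H; cbn [fold_right length]; [simpl; lra|].
  rewrite S_INR. pose proof (H b (or_introl eq_refl)). pose proof (IH (fun v Hv => H v (or_intror Hv))). lra.
Qed.

Section NS.
Context {W I J : Type} (i0 : I) (c : W -> W -> I * J) (Y : (W -> R) -> Prop)
  (HY : closed_subspace (T0_family i0 c) Y) (w0 : W).
Local Notation fam := (T0_family i0 c).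
Local Notation N := (normA (T0_family i0 c)).
Let famnil : fam nil := fam_nil i0 c.

Lemma Y_scal r y : Y y -> Y (fun w => r * y w).
Proof. intros. destruct HY as [_ [_ [_ [Hs _]]]]. apply Hs; auto. Qed.
Lemma Y_plus y z : Y y -> Y z -> Y (fun w => y w + z w).
Proof. intros. destruct HY as [_ [_ [Hs _]]]. apply Hs; auto. Qed.
Lemma Y_zero : Y (fun _ => 0).
Proof. apply (proj1 (proj2 HY)). Qed.
Lemma Y_closed x : in_XA fam x ->
  (forall eps, 0 < eps -> exists y, Y y /\ N (vsub x y) < eps) -> Y x.
Proof. destruct HY as [_ [_ [_ [_ Hs]]]]. apply Hs. Qed.
Lemma Y_sub y z : Y y -> Y z -> Y (fun w => y w - z w).
Proof.
  intros Hy Hz. assert (E : (fun w => y w - z w) = (fun w => y w + (fun v => -1 * z v) w)).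
  { apply functional_extensionality. intros; ring. }
  rewrite E. apply Y_plus; auto. apply Y_scal; auto.
Qed.
Lemma Y_fin y : Y y -> Fin fam y.
Proof. intros Hy. apply HY in Hy. apply Hy. Qed.
Lemma Y_approx y eps : Y y -> 0 < eps -> exists z s, (forall w, ~ In w s -> z w = 0) /\
   Fin fam (fun w => y w - z w) /\ N (fun w => y w - z w) < eps.
Proof.
  intros Hy He. pose proof (proj1 HY y Hy) as [Hf Ha].
  destruct (Ha eps He) as [z [[s Hs] Hz]]. exists z, s. split; auto.
  split; auto. apply NNPP. intros Hn. unfold vsub in Hz.
  unfold Fin in Hn. unfold normA in Hz.
  (* if infinite, normA = 0 but then also z finitely supported makes y - z finite *)
  assert (Fz : Fin fam z).
  { destruct (bnd_fin fam famnil z (fold_right (fun v acc => Rabs (z v) + acc) 0 (nodup (fun u v => excluded_middle_informative (u = v)) s))) as [A _]; auto.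
    intros a [Hna _]. apply nu_fin; auto. apply NoDup_nodup. intros v Hv. apply Hs. intros Hv'. apply Hv. apply nodup_In. auto. }
  destruct (fin_plus fam famnil y (fun w => -1 * z w) Hf (proj1 (fin_scal fam famnil (-1) z Fz))) as [F2 _].
  apply Hn. unfold Fin in F2. assert (E : (fun w => y w + -1 * z w) = (fun w => y w - z w)).
  { apply functional_extensionality; intros; ring. } rewrite E in F2. auto.
Qed.

Definition Ix := (nat * nat * list (nat * (nat * nat)))%type.
Lemma surj_Ix : surj Ix.
Proof. apply surj_prod. apply surj_prod; apply surj_nat. apply surj_list. apply surj_prod. apply surj_nat. apply surj_prod; apply surj_nat. Qed.

Lemma NS (S : W -> Prop) (HS : countable_on S) (eps : R) : 0 < eps -> ~ separable_sub fam Y ->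
  exists y, Y y /\ Fin fam y /\ N y = 1 /\ forall a, fam a -> nu (rst S y) a <= eps.
Proof.
  intros He HNS. apply NNPP. intros Hno.
  assert (Key : forall y, Y y -> eps * N y <= N (rst S y)).
  { intros y Yy. pose proof (Y_fin y Yy) as Fy.
    destruct (fin_mono fam famnil (rst S y) y Fy (rst_abs S y)) as [Fr _].
    pose proof (fin_nonneg fam famnil y Fy) as Ny0.
    destruct (Req_dec (N y) 0) as [E|Hn].
    { rewrite E, Rmult_0_r. apply (fin_nonneg fam famnil); auto. }
    set (r := / N y). assert (Hr : 0 < r) by (apply Rinv_0_lt_compat; lra).
    set (y' := fun w => r * y w).
    assert (Yy' : Y y') by (apply Y_scal; auto).
    destruct (fin_scal fam famnil r y Fy) as [Fy' Ny'].
    assert (N1 : N y' = 1) by (unfold y'; rewrite Ny', Rabs_right by lra; unfold r; field; lra).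
    destruct (classic (exists a, fam a /\ eps < nu (rst S y') a)) as [[a [Ha Hlt]]|Hn2].
    - rewrite (nu_ext _ (fun w => r * rst S y w)) in Hlt by (intros; unfold y'; apply rst_scal).
      rewrite nu_scal, Rabs_right in Hlt by lra.
      pose proof (fin_le fam (rst S y) a Fr Ha).
      assert (eps < r * N (rst S y)) by nra.
      assert (E : eps * N y = (eps / r)) by (unfold r; field; lra). rewrite E.
      apply Rlt_le. apply (Rmult_lt_reg_l r); auto. replace (r * (eps / r)) with eps by (field; lra). auto.
    - exfalso. apply Hno. exists y'. repeat split; auto. intros a Ha. apply Rnot_lt_le. intros Hl. apply Hn2. eauto. }
  apply HNS.
  destruct HS as [f Hf].
  set (enumS := fun i => epsilon (inhabits w0) (fun w => S w /\ f w = i)).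
  assert (EnS : forall w, S w -> enumS (f w) = w).
  { intros w Sw. unfold enumS. destruct (epsilon_spec (inhabits w0) (fun v => S v /\ f v = f w)) as [A B].
    - exists w; auto.
    - apply Hf; auto. }
  set (qv := fun (k : nat) (l : list (nat * (nat * nat))) (w : W) =>
    fold_right (fun t acc => (if excluded_middle_informative (enumS (fst t) = w /\ S w)
                             then (INR (fst (snd t)) - INR (snd (snd t))) / (INR k + 1) else 0) + acc) 0 l).
  set (Cand := fun (t : Ix) y => Y y /\ forall a, fam a ->
     nu (fun w => rst S y w - qv (snd (fst t)) (snd t) w) a <= / (INR (fst (fst t)) + 1)).
  set (dd := fun t => match excluded_middle_informative (exists y, Cand t y) with
                      | left H => proj1_sig (constructive_indefinite_description _ H)
                      | right _ => fun _ => 0 end).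
  assert (ddY : forall t, Y (dd t)).
  { intros t. unfold dd. destruct excluded_middle_informative as [H|H].
    - destruct constructive_indefinite_description as [y Hy]. simpl. apply Hy.
    - apply Y_zero. }
  assert (ddC : forall t y, Cand t y -> Cand t (dd t)).
  { intros t y Hy. unfold dd. destruct excluded_middle_informative as [H|H].
    - destruct constructive_indefinite_description as [y' Hy']. simpl. exact Hy'.
    - exfalso. eauto. }
  destruct surj_Ix as [e He_].
  exists (fun n => dd (e n)). split; [intros; apply ddY|].
  intros y Yy eta Heta.
  destruct (nat_large (2 / (eps * eta))) as [j Hj].
  assert (Hj1 : 0 < INR j + 1) by (pose proof (pos_INR j); lra).
  set (dl := / (INR j + 1)).
  assert (Hdl : 0 < dl) by (apply Rinv_0_lt_compat; auto).
  destruct (Y_approx y (dl / 2) Yy ltac:(lra)) as [z [s0 [Hs0 [Fyz Nyz]]]].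
  set (L := nodup (fun u v => excluded_middle_informative (u = v))
              (filter (fun w => if excluded_middle_informative (S w) then true else false) s0)).
  assert (HL : forall w, In w L <-> In w s0 /\ S w).
  { intros w. unfold L. rewrite nodup_In, filter_In. destruct excluded_middle_informative; intuition congruence. }
  assert (NL : NoDup L) by apply NoDup_nodup.
  destruct (nat_large (INR (length L) * 2 / dl)) as [k Hk].
  assert (Hk1 : 0 < INR k + 1) by (pose proof (pos_INR k); lra).
  assert (Hq : exists l, forall w, (In w L -> Rabs (qv k l w - z w) <= 1 / (INR k + 1)) /\
                                  (~ In w L -> qv k l w = 0)).
  { assert (HLS : forall w, In w L -> S w) by (intros w Hw; apply HL; auto).
    revert NL HLS. generalize L. intros L0 NL HLS.
    induction L0 as [|b L1 IH].
    - exists nil. intros w. split; [intros []|]. auto.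
    - apply NoDup_cons_iff in NL as [Hb NL].
      destruct IH as [l Hl]; auto. { intros w Hw; apply HLS; right; auto. }
      destruct (int_approx (z b) k) as [p [m Hpm]].
      exists ((f b, (p, m)) :: l). intros w.
      change (qv k ((f b, (p, m)) :: l) w) with
        ((if excluded_middle_informative (enumS (f b) = w /\ S w) then (INR p - INR m) / (INR k + 1) else 0) + qv k l w).
      assert (Sb : S b) by (apply HLS; left; auto).
      rewrite EnS by auto.
      destruct (excluded_middle_informative (b = w /\ S w)) as [[<- _]|Hne].
      + rewrite (proj2 (Hl b)) by auto. split; [intros _|intros H; exfalso; apply H; left; auto].
        rewrite Rplus_0_r. auto.
      + assert (b <> w) by (intros <-; apply Hne; auto).
        rewrite Rplus_0_l. split.
        * intros [E|E]; [contradiction|]. apply Hl; auto.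
        * intros Hn. apply Hl. intros H'. apply Hn. right. auto. }
  destruct Hq as [l Hl].
  set (t := (j, k, l) : Ix).
  assert (Cy : Cand t y).
  { split; auto. intros a Ha. cbn [fst snd t].
    rewrite (nu_ext _ (fun w => rst S (fun v => y v - z v) w + (rst S z w - qv k l w))).
    2:{ intros w _. rewrite rst_sub. ring. }
    eapply Rle_trans; [apply nu_plus|].
    assert (A1 : nu (rst S (fun v => y v - z v)) a <= dl / 2).
    { eapply Rle_trans; [apply nu_mono; intros; apply rst_abs|]. left. eapply Rle_lt_trans; [|apply Nyz].
      apply fin_le; auto. }
    assert (A2 : nu (fun w => rst S z w - qv k l w) a <= dl / 2).
    { eapply Rle_trans. apply (nu_fin _ a L); auto. apply Ha.
      - intros w Hw. rewrite (proj2 (Hl w) Hw). unfold rst. destruct excluded_middle_informative; [|ring].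
        rewrite Hs0; [ring|]. intros Hs. apply Hw. apply HL. auto.
      - eapply Rle_trans; [apply (fold_bound _ L (1 / (INR k + 1)))|].
        + intros w Hw. unfold rst. destruct excluded_middle_informative as [Sw|Sw].
          * rewrite Rabs_minus_sym. apply Hl. auto.
          * exfalso. apply Sw. apply HL. auto.
        + assert (E : INR (length L) * (1 / (INR k + 1)) = INR (length L) / (INR k + 1)) by (field; lra).
          rewrite E. apply Rmult_le_reg_r with (INR k + 1); auto. replace (INR (length L) / (INR k + 1) * (INR k + 1)) with (INR (length L)) by (field; lra).
          assert (INR (length L) * 2 / dl < INR k + 1) by lra.
          assert (E2 : INR (length L) = (INR (length L) * 2 / dl) * (dl / 2)) by (field; lra).
          rewrite E2 at 1. nra. }
    unfold dl in *. lra. }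
  destruct (He_ t) as [n En]. exists n. rewrite En.
  pose proof (ddC t y Cy) as [_ Cd].
  set (x := fun w => y w - dd t w).
  assert (Yx : Y x) by (apply Y_sub; auto).
  pose proof (Key x Yx) as Kx.
  assert (Bx : N (rst S x) <= 2 * dl).
  { destruct (fin_mono fam famnil (rst S x) x (Y_fin x Yx) (rst_abs S x)) as [Frx _].
    apply (fin_bound fam famnil); auto. intros a Ha.
    rewrite (nu_ext _ (fun w => (rst S y w - qv k l w) - (rst S (dd t) w - qv k l w))).
    2:{ intros w _. unfold x. rewrite rst_sub. ring. }
    eapply Rle_trans; [apply nu_sub|]. pose proof (proj2 Cy a Ha). pose proof (Cd a Ha).
    cbn [fst snd t] in *. unfold dl. lra. }
  unfold vsub. fold x.
  assert (N x <= 2 * dl / eps).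
  { apply Rmult_le_reg_l with eps; auto. replace (eps * (2 * dl / eps)) with (2 * dl) by (field; lra). lra. }
  assert (2 * dl / eps < eta).
  { unfold dl. apply Rmult_lt_reg_r with (eps * (INR j + 1) / 2). apply Rmult_lt_0_compat; [nra|lra].
    replace (2 * / (INR j + 1) / eps * (eps * (INR j + 1) / 2)) with 1 by (field; lra).
    set (Q := 2 / (eps * eta)) in *.
    assert (HQ : Q * (eps * eta) = 2) by (unfold Q; field; split; lra).
    assert (H1 : (eps * eta) * Q < (eps * eta) * (INR j + 1)) by (apply Rmult_lt_compat_l; nra).
    lra. }
  lra.
Qed.
End NS.

Record Obj (W : Type) := mkObj { oy : W -> R; oz : W -> R; os : list W; oB : list W }.
Arguments mkObj {W}. Arguments oy {W}. Arguments oz {W}. Arguments os {W}. Arguments oB {W}.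

Definition disj {W} (l1 l2 : list W) := forall w, In w l1 -> ~ In w l2.
Definition dk (k : nat) : R := / 16 * (/ 2) ^ k.

Lemma dk_pos k : 0 < dk k.
Proof. unfold dk. apply Rmult_lt_0_compat; [lra|]. apply pow_lt. lra. Qed.
Lemma half_pow_le k : (/ 2) ^ k <= 1.
Proof. rewrite <- (pow1 k). apply pow_incr. lra. Qed.
Lemma dk_le k : dk k <= / 16.
Proof. unfold dk. pose proof (half_pow_le k). pose proof (pow_lt (/2) k ltac:(lra)). nra. Qed.

Lemma sqsum_filter {W} (x : W -> R) (p : W -> bool) a :
  (forall w, In w a -> p w = false -> x w = 0) -> sqsum x (filter p a) = sqsum x a.
Proof.
  induction a as [|b a IH]; intros H; [reflexivity|]. simpl filter.
  destruct (p b) eqn:E.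
  - rewrite !sqsum_cons, IH; auto. intros; apply H; auto; right; auto.
  - rewrite sqsum_cons, IH by (intros; apply H; auto; right; auto). rewrite H; auto; [|left; auto].
    simpl. ring.
Qed.

Section OBJ.
Context {W I J : Type} (i0 : I) (c : W -> W -> I * J) (Y : (W -> R) -> Prop)
  (HY : closed_subspace (T0_family i0 c) Y) (w0 : W) (HNS : ~ separable_sub (T0_family i0 c) Y).
Local Notation fam := (T0_family i0 c).
Local Notation N := (normA (T0_family i0 c)).
Let famnil : fam nil := fam_nil i0 c.

Definition objok (o : Obj W) (d : R) : Prop :=
  Y (oy o) /\ (forall a, fam a -> nu (fun w => oy o w - oz o w) a <= d) /\
  (forall a, fam a -> nu (oz o) a <= 2) /\ (forall w, ~ In w (os o) -> oz o w = 0) /\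
  incl (oB o) (os o) /\ fam (oB o) /\ 1 / 2 <= nu (oz o) (oB o).

Lemma obj_exists (S : W -> Prop) (d : R) : countable_on S -> 0 < d -> d <= / 16 ->
  exists o, objok o d /\ forall w, In w (os o) -> ~ S w.
Proof.
  intros HS Hd Hd2.
  destruct (NS i0 c Y HY w0 S HS (d / 3) ltac:(lra) HNS) as [y [Yy [Fy [Ny HyS]]]].
  destruct (Y_approx i0 c Y HY y (d / 3) Yy ltac:(lra)) as [z0 [s0 [Hs0 [Fyz Nyz]]]].
  set (z := fun w => if excluded_middle_informative (S w) then 0 else z0 w).
  set (s := filter (fun w => if excluded_middle_informative (S w) then false else true) s0).
  assert (Hyz : forall a, fam a -> nu (fun w => y w - z w) a <= d).
  { intros a Ha.
    rewrite (nu_ext _ (fun w => (y w - z0 w) + (rst S y w - rst S (fun v => y v - z0 v) w))).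
    2:{ intros w _. unfold z, rst. destruct excluded_middle_informative; ring. }
    eapply Rle_trans; [apply nu_plus|]. eapply Rle_trans; [apply Rplus_le_compat; [apply Rle_refl|apply nu_sub]|].
    pose proof (fin_le fam _ a Fyz Ha). pose proof (HyS a Ha).
    assert (nu (rst S (fun v => y v - z0 v)) a <= N (fun w => y w - z0 w)).
    { eapply Rle_trans; [apply nu_mono; intros; apply rst_abs|]. apply fin_le; auto. }
    lra. }
  destruct (fin_approx fam y (/ 4) Fy ltac:(lra)) as [a [Ha Hay]]. rewrite Ny in Hay.
  set (B := filter (fun w => if excluded_middle_informative (In w s) then true else false) a).
  exists (mkObj y z s B). unfold objok; cbn [oy oz os oB].
  assert (Hzs : forall w, ~ In w s -> z w = 0).
  { intros w Hw. unfold z. destruct excluded_middle_informative; auto. apply Hs0. intros H. apply Hw.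
    unfold s. apply filter_In. split; auto. destruct excluded_middle_informative; auto. }
  repeat split; auto.
  - intros a' Ha'. pose proof (nu_minus z y a'). pose proof (fin_le fam y a' Fy Ha').
    rewrite (nu_ext (fun w => z w - y w) (fun w => -1 * (y w - z w))) in H by (intros; ring).
    rewrite nu_scal in H. replace (Rabs (-1)) with 1 in H by (rewrite Rabs_left; lra).
    pose proof (Hyz a' Ha'). lra.
  - intros w Hw. unfold B in Hw. apply filter_In in Hw as [_ Hw]. destruct excluded_middle_informative; auto. discriminate.
  - apply NoDup_filter. apply Ha.
  - unfold B. intros x y' Hx Hy'. destruct (fam_filter i0 c (fun w => if excluded_middle_informative (In w s) then true else false) a Ha) as [_ H]. apply H; auto.
  - assert (E : nu z B = nu z a).
    { unfold nu, B. f_equal. apply sqsum_filter. intros w _. destruct excluded_middle_informative; [discriminate|]. intros _. auto. }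
    rewrite E. pose proof (nu_minus y z a). pose proof (Hyz a Ha). lra.
  - intros w Hw. unfold s in Hw. apply filter_In in Hw as [_ Hw]. destruct excluded_middle_informative; auto.
Qed.
End OBJ.

Lemma DC {St} (P : St -> Prop) (Rl : St -> St -> Prop) (s0 : St) : P s0 ->
  (forall s, P s -> exists s', P s' /\ Rl s s') ->
  exists f : nat -> St, f O = s0 /\ forall n, P (f n) /\ Rl (f n) (f (S n)).
Proof.
  intros H0 H.
  set (F := fun (x : {s | P s}) =>
    let (s', Hs') := constructive_indefinite_description _ (H (proj1_sig x) (proj2_sig x)) in
    exist P s' (proj1 Hs')).
  assert (HF : forall x, Rl (proj1_sig x) (proj1_sig (F x))).
  { intros [x Px]. unfold F. simpl. destruct constructive_indefinite_description as [s' [Ps' Rs']]. simpl. auto. }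
  set (g := fix g (n : nat) : {s | P s} := match n with O => exist P s0 H0 | S n => F (g n) end).
  exists (fun n => proj1_sig (g n)). split; auto. intros n. split.
  - apply proj2_sig.
  - apply HF.
Qed.

Section CONS.
Context {W I J : Type} (lt : W -> W -> Prop) (Hw1 : is_omega1 W lt)
  (i0 : I) (c : W -> W -> I * J) (csym : sym_coloring c) (Y : (W -> R) -> Prop)
  (HY : closed_subspace (T0_family i0 c) Y) (w0 : W) (HNS : ~ separable_sub (T0_family i0 c) Y)
  (Hstr : forall A : W -> list W,
    (forall xi, A xi <> nil) ->
    (forall xi eta, xi <> eta -> forall a, In a (A xi) -> ~ In a (A eta)) ->
    exists xi eta, lt xi eta /\ c0_const_on c (A xi) (A eta) i0).
Local Notation fam := (T0_family i0 c).

Lemma seg_cnt xi : countable_on (fun y => lt y xi).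
Proof. apply Hw1. Qed.
Lemma W_uncnt : ~ countable_on (fun _ : W => True).
Proof. apply Hw1. Qed.
Lemma lt_trich x y : lt x y \/ x = y \/ lt y x.
Proof. apply Hw1. Qed.
Lemma lt_irrefl x : ~ lt x x.
Proof. apply Hw1. Qed.

Definition obj0 : Obj W := mkObj (fun _ => 0) (fun _ => 0) nil nil.

Lemma construct : exists O : W -> nat -> Obj W,
  (forall xi k, objok i0 c Y (O xi k) (dk k)) /\
  (forall xi k xi' k', (xi <> xi' \/ k <> k') -> disj (os (O xi k)) (os (O xi' k'))).
Proof.
  set (Rl := fun (xi : W) (h : W -> nat -> Obj W) (t : nat -> Obj W) =>
    (forall k, objok i0 c Y (t k) (dk k)) /\
    (forall k k', k <> k' -> disj (os (t k)) (os (t k'))) /\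
    (forall z k k', lt z xi -> disj (os (t k)) (os (h z k')))).
  destruct (wf_rec_exists lt (proj1 (proj2 (proj2 (proj2 Hw1)))) (fun _ => obj0) Rl) as [g Hg].
  - intros xi h h' t Hhh [A [B C]]. split; [|split]; auto. intros z k k' Hz. rewrite <- Hhh; auto.
  - intros xi h.
    set (S0 := fun w => exists z, lt z xi /\ exists k', In w (os (h z k'))).
    assert (HS0 : countable_on S0).
    { apply cnt_Union; [apply seg_cnt|]. intros z _.
      apply (cnt_sub (fun w => exists k', True /\ In w (os (h z k')))).
      - apply cnt_Union; [apply cnt_nat|]. intros; apply cnt_list.
      - intros w [k' Hk']. eauto. }
    destruct (seq_choice (fun prev o => objok i0 c Y o (dk (length prev)) /\
        (forall w, In w (os o) -> ~ S0 w) /\ forall o', In o' prev -> disj (os o) (os o'))) as [t Ht].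
    + intros prev.
      destruct (obj_exists i0 c Y HY w0 HNS (fun w => S0 w \/ exists o', In o' prev /\ In w (os o'))
                 (dk (length prev))) as [o [Ho Hos]].
      * apply cnt_union2; auto. apply cnt_Union; [apply cnt_list|]. intros; apply cnt_list.
      * apply dk_pos.
      * apply dk_le.
      * exists o. split; [auto|split].
        -- intros w Hw HS. apply (Hos w Hw). left; auto.
        -- intros o' Ho' w Hw Hw'. apply (Hos w Hw). right. eauto.
    + exists t. split; [|split].
      * intros k. destruct (Ht k) as [H _]. rewrite length_map, length_seq in H. auto.
      * assert (D : forall k k', (k' < k)%nat -> disj (os (t k)) (os (t k'))).
        { intros k k' Hlt. destruct (Ht k) as [_ [_ H]]. apply H. apply in_map. apply in_seq. lia. }
        intros k k' Hne. destruct (proj1 (Nat.lt_gt_cases k k') Hne) as [L|L].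
        -- intros w Hw Hw'. apply (D k' k L w Hw' Hw).
        -- apply D; auto.
      * intros z k k' Hz w Hw Hw'. destruct (Ht k) as [_ [H _]]. apply (H w Hw). exists z. split; eauto.
  - exists g. split.
    + intros xi k. apply (Hg xi).
    + intros xi k xi' k' Hne.
      destruct (lt_trich xi xi') as [L|[E|L]].
      * intros w Hw Hw'. destruct (Hg xi') as [_ [_ H]]. apply (H xi k' k L w Hw' Hw).
      * subst xi'. destruct Hne as [Hne|Hne]; [contradiction|]. destruct (Hg xi) as [_ [H _]]. apply H. auto.
      * destruct (Hg xi) as [_ [_ H]]. apply (H xi' k k' L).
Qed.
End CONS.

Section SEL.
Context {W I J : Type} (lt : W -> W -> Prop) (Hw1 : is_omega1 W lt)
  (i0 : I) (c : W -> W -> I * J) (Y : (W -> R) -> Prop) (w0 : W)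
  (Hstr : forall A : W -> list W,
    (forall xi, A xi <> nil) ->
    (forall xi eta, xi <> eta -> forall a, In a (A xi) -> ~ In a (A eta)) ->
    exists xi eta, lt xi eta /\ c0_const_on c (A xi) (A eta) i0)
  (Ob : W -> nat -> Obj W) (HO1 : forall xi k, objok i0 c Y (Ob xi k) (dk k))
  (HO2 : forall xi k xi' k', (xi <> xi' \/ k <> k') -> disj (os (Ob xi k)) (os (Ob xi' k'))).

Definition compat (o o' : Obj W) := c0_const_on c (oB o) (oB o') i0.
Definition big (U : W -> nat -> Prop) := forall m, exists k, (m <= k)%nat /\ ~ countable_on (fun xi => U xi k).
Definition nextU (U : W -> nat -> Prop) xi k := fun xi' k' =>
  U xi' k' /\ (xi' <> xi \/ k' <> k) /\ compat (Ob xi k) (Ob xi' k').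

Lemma oB_nonempty xi k : oB (Ob xi k) <> nil.
Proof.
  intros E. destruct (HO1 xi k) as [_ [_ [_ [_ [_ [_ H]]]]]]. rewrite E, nu_nil in H. lra.
Qed.

Lemma oB_disj xi k xi' k' : (xi <> xi' \/ k <> k') ->
  forall a, In a (oB (Ob xi k)) -> ~ In a (oB (Ob xi' k')).
Proof.
  intros Hne a Ha Ha'. destruct (HO1 xi k) as [_ [_ [_ [_ [I1 _]]]]].
  destruct (HO1 xi' k') as [_ [_ [_ [_ [I2 _]]]]].
  apply (HO2 xi k xi' k' Hne a); auto.
Qed.

Lemma D1 U : big U -> forall m, exists xi k, U xi k /\ (m <= k)%nat /\ big (nextU U xi k).
Proof.
  intros HB m. apply NNPP. intros Hno.
  destruct (HB m) as [k0 [Hk0 V0]].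
  assert (Hm : forall xi, U xi k0 -> exists m', forall k', (m' <= k')%nat ->
             countable_on (fun xi' => nextU U xi k0 xi' k')).
  { intros xi Uxi. apply NNPP. intros Hn. apply Hno. exists xi, k0. split; auto. split; auto.
    intros m'. apply NNPP. intros Hn2. apply Hn. exists m'. intros k' Hk'. apply NNPP. intros Hc.
    apply Hn2. exists k'. auto. }
  set (Kf := fun xi => epsilon (inhabits 0%nat) (fun m' => forall k', (m' <= k')%nat ->
             countable_on (fun xi' => nextU U xi k0 xi' k'))).
  destruct (pigeon (fun xi => U xi k0) Kf V0) as [ms Hms].
  destruct (HB (Nat.max ms (S k0))) as [k [Hk Uk]].
  set (V := fun xi => U xi k0 /\ Kf xi = ms).
  assert (Ceta : forall eta, V eta -> countable_on (fun th => U th k /\ compat (Ob eta k0) (Ob th k))).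
  { intros eta [Ueta Keta].
    pose proof (epsilon_spec (inhabits 0%nat) (fun m' => forall k', (m' <= k')%nat ->
             countable_on (fun xi' => nextU U eta k0 xi' k')) (Hm eta Ueta)) as Hs.
    fold (Kf eta) in Hs. specialize (Hs k ltac:(lia)).
    apply (cnt_sub _ _ Hs). intros th [A B]. split; auto. split; auto. right. lia. }
  set (Rl := fun (xi : W) (h : W -> W * W) (p : W * W) =>
    V (fst p) /\ (forall z, lt z xi -> fst p <> fst (h z)) /\ U (snd p) k /\
    (forall z, lt z xi -> snd p <> snd (h z)) /\
    (forall z, lt z xi -> V (fst (h z)) -> ~ compat (Ob (fst (h z)) k0) (Ob (snd p) k))).
  destruct (wf_rec_exists lt (proj1 (proj2 (proj2 (proj2 Hw1)))) (w0, w0) Rl) as [g Hg].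
  - intros xi h h' p Hhh [A [B [C [D E]]]]. split; [|split; [|split; [|split]]]; auto.
    + intros z Hz. rewrite <- Hhh; auto.
    + intros z Hz. rewrite <- Hhh; auto.
    + intros z Hz. rewrite <- Hhh; auto.
  - intros xi h.
    destruct (uncnt_avoid V (fun eta => exists z, lt z xi /\ eta = fst (h z)) Hms) as [eta [Veta Heta]].
    { apply cnt_Union; [apply (seg_cnt lt Hw1)|]. intros; apply cnt_single. }
    destruct (uncnt_avoid (fun th => U th k)
       (fun th => (exists z, lt z xi /\ th = snd (h z)) \/
                  (exists z, (lt z xi /\ V (fst (h z))) /\ (U th k /\ compat (Ob (fst (h z)) k0) (Ob th k))))
       Uk) as [th [Uth Hth]].
    { apply cnt_union2.
      - apply cnt_Union; [apply (seg_cnt lt Hw1)|]. intros; apply cnt_single.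
      - apply cnt_Union.
        + apply (cnt_sub (fun z => lt z xi)); [apply (seg_cnt lt Hw1)|]. intros z [Hz _]; auto.
        + intros z [_ Vz]. apply Ceta; auto. }
    exists (eta, th). unfold Rl; cbn [fst snd]. split; [auto|split; [|split; [auto|split]]].
    + intros z Hz E. apply Heta. eauto.
    + intros z Hz E. apply Hth. left. eauto.
    + intros z Hz Vz Hc. apply Hth. right. exists z. auto.
  - assert (Dfst : forall x y, x <> y -> fst (g x) <> fst (g y)).
    { intros x y Hxy. destruct (lt_trich lt Hw1 x y) as [L|[E|L]].
      - intros E. destruct (Hg y) as [_ [H _]]. apply (H x L). auto.
      - contradiction.
      - destruct (Hg x) as [_ [H _]]. apply (H y L). }
    assert (Dsnd : forall x y, x <> y -> snd (g x) <> snd (g y)).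
    { intros x y Hxy. destruct (lt_trich lt Hw1 x y) as [L|[E|L]].
      - intros E. destruct (Hg y) as [_ [_ [_ [H _]]]]. apply (H x L). auto.
      - contradiction.
      - destruct (Hg x) as [_ [_ [_ [H _]]]]. apply (H y L). }
    assert (Hkk : k <> k0) by lia.
    destruct (Hstr (fun xi => oB (Ob (fst (g xi)) k0) ++ oB (Ob (snd (g xi)) k))) as [x [y [Lxy Hc]]].
    + intros xi E. apply app_eq_nil in E as [E _]. apply (oB_nonempty _ _ E).
    + intros x y Hxy a Ha Ha'. apply in_app_or in Ha. apply in_app_or in Ha'.
      destruct Ha as [Ha|Ha]; destruct Ha' as [Ha'|Ha'].
      * apply (oB_disj _ _ _ _ (or_introl (Dfst x y Hxy)) a Ha Ha').
      * apply (oB_disj _ _ _ _ (or_intror (not_eq_sym Hkk)) a Ha Ha').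
      * apply (oB_disj _ _ _ _ (or_intror Hkk) a Ha Ha').
      * apply (oB_disj _ _ _ _ (or_introl (Dsnd x y Hxy)) a Ha Ha').
    + destruct (Hg y) as [_ [_ [_ [_ H]]]]. apply (H x Lxy).
      * apply (Hg x).
      * intros a b Ha Hb. apply Hc; apply in_or_app; [left|right]; auto.
Qed.

Lemma select : exists p : nat -> W * nat, (forall n, (n <= snd (p n))%nat) /\
  forall i j, (i < j)%nat -> p i <> p j /\
    compat (Ob (fst (p i)) (snd (p i))) (Ob (fst (p j)) (snd (p j))).
Proof.
  destruct (DC (fun s : nat * (W -> nat -> Prop) => big (snd s))
     (fun s s' => fst s' = S (fst s) /\ exists xi k, snd s xi k /\ (fst s <= k)%nat /\
                  snd s' = nextU (snd s) xi k) (0%nat, fun _ _ => True)) as [f [f0 Hf]].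
  - intros m. exists m. split; auto. apply (W_uncnt lt Hw1).
  - intros [n U] HU. simpl in HU. destruct (D1 U HU n) as [xi [k [A [B C]]]].
    exists (S n, nextU U xi k). simpl. split; auto. split; auto. exists xi, k. auto.
  - assert (Ef : forall n, fst (f n) = n).
    { induction n; [rewrite f0; auto|]. destruct (Hf n) as [_ [E _]]. rewrite E, IHn. auto. }
    set (U := fun n => snd (f n)).
    set (p := fun n => epsilon (inhabits (w0, 0%nat)) (fun pk => U n (fst pk) (snd pk) /\ (n <= snd pk)%nat /\
                U (S n) = nextU (U n) (fst pk) (snd pk))).
    assert (Hp : forall n, U n (fst (p n)) (snd (p n)) /\ (n <= snd (p n))%nat /\
                U (S n) = nextU (U n) (fst (p n)) (snd (p n))).
    { intros n. unfold p. apply (epsilon_spec (inhabits (w0, 0%nat))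
        (fun pk => U n (fst pk) (snd pk) /\ (n <= snd pk)%nat /\ U (S n) = nextU (U n) (fst pk) (snd pk))).
      destruct (Hf n) as [_ [_ [xi [k [A [B C]]]]]]. exists (xi, k). rewrite Ef in B. simpl. auto. }
    assert (Mono : forall i d xi k, U (S i + d)%nat xi k -> U (S i) xi k).
    { intros i d. induction d as [|d IH]; intros xi k H.
      - rewrite Nat.add_0_r in H. auto.
      - replace (S i + S d)%nat with (S (S i + d)) in H by lia. destruct (Hp (S i + d)%nat) as [_ [_ E]].
        rewrite E in H. destruct H as [H _]. apply IH. auto. }
    exists p. split; [intros n; apply Hp|].
    intros i j Hij. destruct (Hp j) as [Uj _].
    assert (Uj' : U (S i + (j - S i))%nat (fst (p j)) (snd (p j))) by (replace (S i + (j - S i))%nat with j by lia; auto).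
    apply Mono in Uj'.
    destruct (Hp i) as [_ [_ E]]. rewrite E in Uj'. destruct Uj' as [_ [Hne Hc]].
    split; auto. intros Eq. rewrite Eq in Hne. destruct Hne; auto.
Qed.
End SEL.

Fixpoint rs (f : nat -> R) (K m : nat) : R :=
  match m with O => 0 | S m => rs f K m + f (K + m)%nat end.

Lemma rs_le f g K m : (forall i, (i < m)%nat -> f (K + i)%nat <= g (K + i)%nat) -> rs f K m <= rs g K m.
Proof. induction m; intros H; simpl; [lra|]. pose proof (H m ltac:(lia)). pose proof (IHm (fun i Hi => H i ltac:(lia))). lra. Qed.

Lemma rs_nonneg f K m : (forall n, 0 <= f n) -> 0 <= rs f K m.
Proof. intros H. induction m; simpl; [lra|]. pose proof (H (K + m)%nat). lra. Qed.

Lemma rs_scal r f K m : rs (fun n => r * f n) K m = r * rs f K m.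
Proof. induction m; simpl; [ring|]. rewrite IHm. ring. Qed.

Lemma rs_plus f g K m : rs (fun n => f n + g n) K m = rs f K m + rs g K m.
Proof. induction m; simpl; [ring|]. rewrite IHm. ring. Qed.

Lemma rs_split f K m : rs f 0 (K + m) = rs f 0 K + rs f K m.
Proof. induction m; simpl. rewrite Nat.add_0_r. ring. rewrite Nat.add_succ_r. simpl. rewrite IHm. ring. Qed.

Lemma rs_term f K m i : (forall n, 0 <= f n) -> (i < m)%nat -> f (K + i)%nat <= rs f K m.
Proof.
  intros H. induction m; intros Hi; [lia|]. simpl.
  destruct (Nat.eq_dec i m) as [->|Hne].
  - pose proof (rs_nonneg f K m H). lra.
  - pose proof (IHm ltac:(lia)). pose proof (H (K + m)%nat). lra.
Qed.

Lemma rs_geo K m : rs (fun n => (/ 2) ^ n) K m <= 2 - 2 * (/ 2) ^ (K + m).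
Proof.
  induction m; simpl.
  - rewrite Nat.add_0_r. pose proof (half_pow_le K). lra.
  - rewrite Nat.add_succ_r. simpl. lra.
Qed.

Lemma rs_dk K m : rs dk K m <= / 8.
Proof.
  unfold dk. rewrite rs_scal. pose proof (rs_geo K m). assert (0 < (/2) ^ (K + m)) by (apply pow_lt; lra). change (pow (/2)) with (fun n : nat => (/2) ^ n). lra.
Qed.

Lemma le_sqrt_of_sq A B : 0 <= A -> A ^ 2 <= B -> A <= sqrt B.
Proof. intros HA HB. rewrite <- (sqrt_pow2 A HA). apply sqrt_le_1_alt. auto. Qed.

Lemma abs_le_sqrt_rs (u : nat -> R) K m i : (i < m)%nat -> Rabs (u (K + i)%nat) <= sqrt (rs (fun n => u n ^ 2) K m).
Proof.
  intros Hi. apply le_sqrt_of_sq; [apply Rabs_pos|]. rewrite pow2_abs.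
  apply (rs_term (fun n => u n ^ 2)); auto. intros; apply pow2_ge_0.
Qed.

Lemma sqsum_zero {W} (a : list W) : sqsum (fun _ : W => 0) a = 0.
Proof. induction a; [reflexivity|]. rewrite sqsum_cons, IHa. ring. Qed.

Section EST.
Context {W I J : Type} (i0 : I) (c : W -> W -> I * J).
Local Notation fam := (T0_family i0 c).
Context (yv zv : nat -> W -> R) (sv Bv : nat -> list W)
  (H2 : forall n a, fam a -> nu (fun w => yv n w - zv n w) a <= dk n)
  (H3 : forall n a, fam a -> nu (zv n) a <= 2)
  (H4 : forall n w, ~ In w (sv n) -> zv n w = 0)
  (H5a : forall n, incl (Bv n) (sv n)) (H5b : forall n, fam (Bv n))
  (H5c : forall n, 1 / 2 <= nu (zv n) (Bv n))
  (H6 : forall i j, i <> j -> disj (sv i) (sv j))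
  (H7 : forall i j, i <> j -> c0_const_on c (Bv i) (Bv j) i0).

Definition Vr u K m (w : W) := rs (fun n => u n * yv n w) K m.
Definition Zr u K m (w : W) := rs (fun n => u n * zv n w) K m.
Definition Er u K m (w : W) := rs (fun n => u n * (yv n w - zv n w)) K m.

Lemma z_other n n' w : n <> n' -> In w (sv n) -> zv n' w = 0.
Proof. intros Hne Hw. apply H4. apply (H6 n n' Hne w Hw). Qed.

Lemma Zr_zero u K m w : (forall i, (i < m)%nat -> zv (K + i)%nat w = 0) -> Zr u K m w = 0.
Proof. intros H. unfold Zr. induction m; simpl; auto. rewrite IHm by (intros; apply H; lia). rewrite H by lia. ring. Qed.

Lemma sqsum_Zr u K m a : sqsum (Zr u K m) a = rs (fun n => u n ^ 2 * sqsum (zv n) a) K m.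
Proof.
  induction m.
  - change (sqsum (fun _ : W => 0) a = 0). apply sqsum_zero.
  - rewrite (sqsum_add_sq _ (Zr u K m) (fun w => u (K + m)%nat * zv (K + m)%nat w)).
    { rewrite IHm, sqsum_scal. reflexivity. }
    intros w _.
    change (Zr u K (S m) w) with (Zr u K m w + u (K + m)%nat * zv (K + m)%nat w).
    destruct (Req_dec (zv (K + m)%nat w) 0) as [E|E].
    + rewrite E. ring.
    + rewrite Zr_zero. ring. intros i Hi. apply (z_other (K + m)%nat); [lia|].
      apply NNPP. intros Hn. apply E. apply H4. auto.
Qed.

Lemma Vr_split u K m w : Vr u K m w = Zr u K m w + Er u K m w.
Proof. unfold Vr, Zr, Er. rewrite <- rs_plus. induction m; simpl; [ring|]. rewrite IHm. ring. Qed.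

Lemma rsq_nonneg (u : nat -> R) K m : 0 <= rs (fun n => u n ^ 2) K m.
Proof. apply rs_nonneg. intros; apply pow2_ge_0. Qed.

Lemma nu_Zr u K m a : fam a -> nu (Zr u K m) a <= 2 * sqrt (rs (fun n => u n ^ 2) K m).
Proof.
  intros Ha. unfold nu. rewrite sqsum_Zr. pose proof (rsq_nonneg u K m).
  apply sqrt_le_sq. pose proof (sqrt_pos (rs (fun n => u n ^ 2) K m)); lra.
  rewrite Rpow_mult_distr, pow2_sqrt by auto.
  replace (2 ^ 2 * rs (fun n => u n ^ 2) K m) with (rs (fun n => 4 * u n ^ 2) K m) by (rewrite rs_scal; simpl; ring).
  apply rs_le. intros i _. rewrite Rmult_comm. apply Rmult_le_compat_r; [apply pow2_ge_0|].
  rewrite <- nu_sq. pose proof (H3 (K + i)%nat a Ha). pose proof (nu_nonneg (zv (K + i)%nat) a). nra.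
Qed.

Lemma nu_Er u K m a : fam a -> nu (Er u K m) a <= rs (fun n => Rabs (u n) * dk n) K m.
Proof.
  intros Ha. induction m.
  - change (nu (fun _ : W => 0) a <= 0). unfold nu. rewrite sqsum_zero, sqrt_0. lra.
  - change (nu (fun w => Er u K m w + u (K + m)%nat * (yv (K + m)%nat w - zv (K + m)%nat w)) a <=
            rs (fun n => Rabs (u n) * dk n) K m + Rabs (u (K + m)%nat) * dk (K + m)%nat).
    eapply Rle_trans; [apply nu_plus|]. apply Rplus_le_compat; auto.
    rewrite (nu_scal (u (K + m)%nat) (fun w => yv (K + m)%nat w - zv (K + m)%nat w)).
    apply Rmult_le_compat_l; [apply Rabs_pos|]. apply H2; auto.
Qed.

Lemma nu_Er2 u K m a : fam a -> nu (Er u K m) a <= / 8 * sqrt (rs (fun n => u n ^ 2) K m).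
Proof.
  intros Ha. eapply Rle_trans; [apply nu_Er; auto|].
  eapply Rle_trans; [apply (rs_le _ (fun n => sqrt (rs (fun n => u n ^ 2) K m) * dk n))|].
  - intros i Hi. apply Rmult_le_compat_r; [left; apply dk_pos|]. apply abs_le_sqrt_rs; auto.
  - rewrite rs_scal. pose proof (rs_dk K m). pose proof (sqrt_pos (rs (fun n => u n ^ 2) K m)). nra.
Qed.

Lemma E_up u K m a : fam a -> nu (Vr u K m) a <= 3 * sqrt (rs (fun n => u n ^ 2) K m).
Proof.
  intros Ha. rewrite (nu_ext _ (fun w => Zr u K m w + Er u K m w)) by (intros; apply Vr_split).
  eapply Rle_trans; [apply nu_plus|]. pose proof (nu_Zr u K m a Ha). pose proof (nu_Er2 u K m a Ha).
  pose proof (sqrt_pos (rs (fun n => u n ^ 2) K m)). lra.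
Qed.

Fixpoint Bcat (K : nat) : list W := match K with O => nil | S K => Bcat K ++ Bv K end.

Lemma in_Bcat K w : In w (Bcat K) <-> exists i, (i < K)%nat /\ In w (Bv i).
Proof.
  induction K; simpl.
  - split; [intros []|intros [i [Hi _]]; lia].
  - rewrite in_app_iff, IHK. split.
    + intros [[i [Hi Hw]]|Hw]; [exists i; split; auto; lia|exists K; split; auto].
    + intros [i [Hi Hw]]. destruct (Nat.eq_dec i K) as [->|Hne]; [right; auto|left; exists i; split; auto; lia].
Qed.

Lemma fam_Bcat K : fam (Bcat K).
Proof.
  split.
  - induction K; simpl; [constructor|]. apply NoDup_app; auto. apply H5b.
    intros w Hw Hw'. apply in_Bcat in Hw as [i [Hi Hw]].
    apply (H6 i K ltac:(lia) w); apply H5a; auto.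
  - intros x y Hx Hy Hxy. apply in_Bcat in Hx as [i [Hi Hx]]. apply in_Bcat in Hy as [j [Hj Hy]].
    destruct (Nat.eq_dec i j) as [<-|Hne].
    + apply (H5b i); auto.
    + apply (H7 i j Hne); auto.
Qed.

Lemma sqsum_Zr_B u K : sqsum (Zr u 0 K) (Bcat K) = rs (fun n => u n ^ 2 * sqsum (zv n) (Bv n)) 0 K.
Proof.
  induction K.
  - reflexivity.
  - change (Bcat (S K)) with (Bcat K ++ Bv K). rewrite sqsum_app.
    change (rs (fun n => u n ^ 2 * sqsum (zv n) (Bv n)) 0 (S K)) with
      (rs (fun n => u n ^ 2 * sqsum (zv n) (Bv n)) 0 K + u K ^ 2 * sqsum (zv K) (Bv K)).
    rewrite <- IHK. f_equal.
    + apply sqsum_ext. intros w Hw. apply in_Bcat in Hw as [i [Hi Hw]].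
      change (Zr u 0 (S K) w) with (Zr u 0 K w + u K * zv K w).
      rewrite (z_other i K w) by (try lia; apply H5a; auto). f_equal. ring.
    + rewrite <- sqsum_scal. apply sqsum_ext. intros w Hw.
      change (Zr u 0 (S K) w) with (Zr u 0 K w + u K * zv K w).
      rewrite Zr_zero. f_equal. ring. intros i Hi. apply (z_other K); [lia|]. apply H5a; auto.
Qed.

Lemma E_low u K : 3 / 8 * sqrt (rs (fun n => u n ^ 2) 0 K) <= nu (Vr u 0 K) (Bcat K).
Proof.
  pose proof (rsq_nonneg u 0 K) as HR. set (R0 := rs (fun n => u n ^ 2) 0 K) in *.
  assert (HZ : 1 / 2 * sqrt R0 <= nu (Zr u 0 K) (Bcat K)).
  { unfold nu. rewrite sqsum_Zr_B. apply le_sqrt_of_sq.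
    - pose proof (sqrt_pos R0). lra.
    - rewrite Rpow_mult_distr, pow2_sqrt by auto. unfold R0.
      replace ((1 / 2) ^ 2 * rs (fun n => u n ^ 2) 0 K) with (rs (fun n => / 4 * u n ^ 2) 0 K) by (rewrite rs_scal; field).
      apply rs_le. intros i _. pose proof (pow2_ge_0 (u (0 + i)%nat)).
      pose proof (nu_sq (zv (0 + i)%nat) (Bv (0 + i)%nat)). pose proof (H5c (0 + i)%nat).
      assert (/ 4 <= sqsum (zv (0 + i)%nat) (Bv (0 + i)%nat)) by nra. nra. }
  pose proof (nu_Er2 u 0 K (Bcat K) (fam_Bcat K)) as HE.
  pose proof (nu_minus (Zr u 0 K) (Vr u 0 K) (Bcat K)).
  rewrite (nu_ext (fun w => Zr u 0 K w - Vr u 0 K w) (fun w => -1 * Er u 0 K w)) in H.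
  2:{ intros w _. rewrite Vr_split. ring. }
  rewrite nu_scal in H. replace (Rabs (-1)) with 1 in H by (rewrite Rabs_left; lra).
  fold R0 in HE. lra.
Qed.
End EST.

Lemma sum_n_rs f n : sum_n f n = rs f 0 (S n).
Proof.
  induction n.
  - rewrite sum_O. simpl. symmetry. apply Rplus_0_l.
  - rewrite sum_Sn, IHn. reflexivity.
Qed.

Lemma sum_n_m_rs f n d : sum_n_m f n (n + d) = rs f n (S d).
Proof.
  induction d.
  - rewrite Nat.add_0_r, sum_n_n. simpl. rewrite Nat.add_0_r. symmetry. apply Rplus_0_l.
  - rewrite Nat.add_succ_r, sum_n_Sm by lia. rewrite IHd. change (rs f n (S (S d))) with (rs f n (S d) + f (n + S d)%nat).
    rewrite Nat.add_succ_r. reflexivity.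
Qed.

Lemma lim_rs f l : is_series f l -> is_lim_seq (fun K => rs f 0 K) l.
Proof.
  intros H. apply is_lim_seq_incr_1. apply (is_lim_seq_ext (sum_n f)).
  - intros n. apply sum_n_rs.
  - exact H.
Qed.

Lemma lim_sqsum {W} (x : nat -> W -> R) (xl : W -> R) a :
  (forall w, is_lim_seq (fun M => x M w) (xl w)) -> is_lim_seq (fun M => sqsum (x M) a) (sqsum xl a).
Proof.
  intros H. induction a as [|b a IH].
  - apply is_lim_seq_const.
  - rewrite sqsum_cons. apply (is_lim_seq_ext (fun M => x M b * x M b + sqsum (x M) a)).
    + intros M. rewrite sqsum_cons. ring.
    + replace (xl b ^ 2) with (xl b * xl b) by ring. apply is_lim_seq_plus'; auto.
      apply is_lim_seq_mult'; auto.
Qed.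

Lemma lsc {W} (x : nat -> W -> R) (xl : W -> R) a C :
  (forall w, is_lim_seq (fun M => x M w) (xl w)) -> (forall M, sqsum (x M) a <= C) -> sqsum xl a <= C.
Proof.
  intros H HC. pose proof (lim_sqsum x xl a H) as L.
  assert (Rbar_le (sqsum xl a) C). { apply (is_lim_seq_le _ (fun _ => C) _ _ HC L). apply is_lim_seq_const. }
  simpl in H0. auto.
Qed.

Lemma sqrt_lt_of_sq T e : 0 <= T -> 0 < e -> T < e ^ 2 -> sqrt T < e.
Proof.
  intros HT He H. apply Rnot_le_lt. intros Hn. pose proof (pow2_sqrt T HT).
  assert (e ^ 2 <= sqrt T ^ 2) by (apply pow_incr; lra). lra.
Qed.

Section LIM.
Context {W I J : Type} (i0 : I) (c : W -> W -> I * J).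
Local Notation fam := (T0_family i0 c).
Context (yv zv : nat -> W -> R) (sv Bv : nat -> list W)
  (H2 : forall n a, fam a -> nu (fun w => yv n w - zv n w) a <= dk n)
  (H3 : forall n a, fam a -> nu (zv n) a <= 2)
  (H4 : forall n w, ~ In w (sv n) -> zv n w = 0)
  (H5a : forall n, incl (Bv n) (sv n)) (H5b : forall n, fam (Bv n))
  (H5c : forall n, 1 / 2 <= nu (zv n) (Bv n))
  (H6 : forall i j, i <> j -> disj (sv i) (sv j))
  (H7 : forall i j, i <> j -> c0_const_on c (Bv i) (Bv j) i0).
Context (u : nat -> R) (Hu : in_l2 u).

Let Su := Series (fun n => u n ^ 2).
Let HSu : is_lim_seq (fun K => rs (fun n => u n ^ 2) 0 K) Su := lim_rs _ _ (Series_correct _ Hu).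
Definition Tl K := Su - rs (fun n => u n ^ 2) 0 K.

Lemma rs_le_Su K : rs (fun n => u n ^ 2) 0 K <= Su.
Proof.
  assert (Rbar_le (rs (fun n => u n ^ 2) 0 K) Su).
  { apply (is_lim_seq_le (fun _ => rs (fun n => u n ^ 2) 0 K) (fun n => rs (fun n => u n ^ 2) 0 (n + K))).
    - intros n. rewrite Nat.add_comm, rs_split. pose proof (rsq_nonneg u K n). lra.
    - apply is_lim_seq_const.
    - apply (proj1 (is_lim_seq_incr_n (fun n => rs (fun n => u n ^ 2) 0 n) K _)). exact HSu. }
  simpl in H. auto.
Qed.

Lemma Tl_nonneg K : 0 <= Tl K.
Proof. unfold Tl. pose proof (rs_le_Su K). lra. Qed.

Lemma Su_nonneg : 0 <= Su.
Proof. pose proof (rs_le_Su 0). simpl in H. lra. Qed.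

Lemma tail_bound K m : rs (fun n => u n ^ 2) K m <= Tl K.
Proof. unfold Tl. pose proof (rs_le_Su (K + m)). rewrite rs_split in H. lra. Qed.

Lemma Tl_small eps : 0 < eps -> exists N, forall n, (N <= n)%nat -> Tl n < eps.
Proof.
  intros He. pose proof (proj2 (is_lim_seq_spec _ _) HSu (mkposreal eps He)) as [N HN].
  exists N. intros n Hn. specialize (HN n Hn). cbn [pos] in HN. unfold Tl.
  rewrite Rabs_minus_sym in HN. pose proof (Rle_abs (Su - rs (fun n => u n ^ 2) 0 n)). lra.
Qed.

Lemma ex_pt w : ex_series (fun n => u n * yv n w).
Proof.
  apply (@ex_series_Cauchy R_AbsRing R_CompleteNormedModule). intros eps.
  destruct (Tl_small ((eps / 3) ^ 2)) as [N HN]. { apply pow_lt. destruct eps; simpl; lra. }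
  exists N. intros n m Hn Hm.
  destruct (le_lt_dec n m) as [Hnm|Hnm].
  - replace m with (n + (m - n))%nat by lia. rewrite sum_n_m_rs.
    change (norm (rs (fun n0 => u n0 * yv n0 w) n (S (m - n)))) with (Rabs (Vr yv u n (S (m - n)) w)).
    rewrite <- nu_single. eapply Rle_lt_trans; [apply (E_up i0 c yv zv sv H2 H3 H4 H6); apply fam_single|].
    pose proof (tail_bound n (S (m - n))). pose proof (HN n Hn). pose proof (rsq_nonneg u n (S (m - n))).
    assert (sqrt (rs (fun n => u n ^ 2) n (S (m - n))) < eps / 3).
    { apply sqrt_lt_of_sq; auto. destruct eps; simpl; lra. lra. }
    lra.
  - rewrite sum_n_m_zero by auto. rewrite norm_zero. destruct eps; simpl; lra.
Qed.

Definition Lf (w : W) := Series (fun n => u n * yv n w).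

Lemma Lconv w : is_lim_seq (fun K => Vr yv u 0 K w) (Lf w).
Proof. apply lim_rs. apply Series_correct. apply ex_pt. Qed.

Lemma L1 K a : fam a -> nu (fun w => Lf w - Vr yv u 0 K w) a <= 3 * sqrt (Tl K).
Proof.
  intros Ha. unfold nu. apply sqrt_le_sq. pose proof (sqrt_pos (Tl K)); lra.
  rewrite Rpow_mult_distr, pow2_sqrt by apply Tl_nonneg.
  apply (lsc (fun M => Vr yv u K M)).
  - intros w. apply (is_lim_seq_ext (fun M => Vr yv u 0 (M + K) w - Vr yv u 0 K w)).
    + intros M. unfold Vr. rewrite Nat.add_comm, rs_split. ring.
    + apply is_lim_seq_minus'; [|apply is_lim_seq_const]. apply (proj1 (is_lim_seq_incr_n (fun n => Vr yv u 0 n w) K _)). apply Lconv.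
  - intros M. rewrite <- nu_sq. pose proof (E_up i0 c yv zv sv H2 H3 H4 H6 u K M a Ha) as A1.
    pose proof (nu_nonneg (Vr yv u K M) a) as A2. pose proof (tail_bound K M) as A3.
    pose proof (rsq_nonneg u K M) as A4. pose proof (pow2_sqrt _ A4) as A5.
    assert (A6 : nu (Vr yv u K M) a ^ 2 <= (3 * sqrt (rs (fun n => u n ^ 2) K M)) ^ 2) by (apply pow_incr; lra).
    rewrite Rpow_mult_distr, A5 in A6. lra.
Qed.
End LIM.

Section FINAL.
Context {W I J : Type} (i0 : I) (c : W -> W -> I * J).
Local Notation fam := (T0_family i0 c).
Local Notation N := (normA (T0_family i0 c)).
Context (Y : (W -> R) -> Prop) (HY : closed_subspace fam Y).
Context (yv zv : nat -> W -> R) (sv Bv : nat -> list W)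
  (H1 : forall n, Y (yv n))
  (H2 : forall n a, fam a -> nu (fun w => yv n w - zv n w) a <= dk n)
  (H3 : forall n a, fam a -> nu (zv n) a <= 2)
  (H4 : forall n w, ~ In w (sv n) -> zv n w = 0)
  (H5a : forall n, incl (Bv n) (sv n)) (H5b : forall n, fam (Bv n))
  (H5c : forall n, 1 / 2 <= nu (zv n) (Bv n))
  (H6 : forall i j, i <> j -> disj (sv i) (sv j))
  (H7 : forall i j, i <> j -> c0_const_on c (Bv i) (Bv j) i0).
Let famnil : fam nil := fam_nil i0 c.

Lemma Y_P u K : Y (Vr yv u 0 K).
Proof.
  induction K.
  - exact (Y_zero i0 c Y HY).
  - change (Y (fun w => Vr yv u 0 K w + u K * yv K w)). apply (Y_plus i0 c Y HY); auto.
    apply (Y_scal i0 c Y HY); auto.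
Qed.

Lemma Tl_small3 u (Hu : in_l2 u) eps : 0 < eps -> exists K, 3 * sqrt (Tl u K) < eps.
Proof.
  intros He. destruct (Tl_small u Hu ((eps / 3) ^ 2)) as [K HK]. { apply pow_lt; lra. }
  exists K. specialize (HK K (le_n K)).
  assert (sqrt (Tl u K) < eps / 3) by (apply sqrt_lt_of_sq; auto; [apply Tl_nonneg; auto|lra]). lra.
Qed.

Lemma L1' u (Hu : in_l2 u) K a : fam a -> nu (fun w => Lf yv u w - Vr yv u 0 K w) a <= 3 * sqrt (Tl u K).
Proof. apply (L1 i0 c yv zv sv H2 H3 H4 H6 u Hu). Qed.

Lemma Lbound u (Hu : in_l2 u) a : fam a -> nu (Lf yv u) a <= 3 * sqrt (Series (fun n => u n ^ 2)).
Proof.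
  intros Ha. pose proof (L1' u Hu 0 a Ha). rewrite (nu_ext _ (Lf yv u)) in H.
  - unfold Tl in H. simpl rs in H. rewrite Rminus_0_r in H. auto.
  - intros w _. unfold Vr. simpl. ring.
Qed.

Lemma LFin u (Hu : in_l2 u) : Fin fam (Lf yv u).
Proof. apply (bnd_fin fam famnil (Lf yv u) _ (Lbound u Hu)). Qed.

Lemma LY u (Hu : in_l2 u) : Y (Lf yv u).
Proof.
  apply (Y_closed i0 c Y HY).
  - split; [apply LFin; auto|]. intros eps He.
    destruct (Tl_small3 u Hu (eps / 2)) as [K HK]; [lra|].
    destruct (Y_approx i0 c Y HY (Vr yv u 0 K) (eps / 2) (Y_P u K) ltac:(lra)) as [z [s0 [Hs0 [Fz Nz]]]].
    exists z. split; [exists s0; auto|].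
    destruct (bnd_fin fam famnil (vsub (Lf yv u) z) (3 * sqrt (Tl u K) + N (fun w => Vr yv u 0 K w - z w))) as [_ [_ B]].
    + intros a Ha. unfold vsub.
      rewrite (nu_ext _ (fun w => (Lf yv u w - Vr yv u 0 K w) + (Vr yv u 0 K w - z w))) by (intros; ring).
      eapply Rle_trans; [apply nu_plus|]. apply Rplus_le_compat; [apply L1'; auto|]. apply fin_le; auto.
    + lra.
  - intros eps He. destruct (Tl_small3 u Hu eps He) as [K HK]. exists (Vr yv u 0 K). split; [apply Y_P|].
    destruct (bnd_fin fam famnil (vsub (Lf yv u) (Vr yv u 0 K)) (3 * sqrt (Tl u K))) as [_ [_ B]].
    + intros a Ha. apply L1'; auto.
    + lra.
Qed.

Lemma Llower u (Hu : in_l2 u) : / 16 * sqrt (Series (fun n => u n ^ 2)) <= N (Lf yv u).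
Proof.
  pose proof (Su_nonneg u Hu) as HS. set (Su := Series (fun n => u n ^ 2)) in *.
  pose proof (fin_nonneg fam famnil _ (LFin u Hu)) as HN0.
  destruct (Req_dec Su 0) as [E|Hne].
  { rewrite E, sqrt_0. lra. }
  destruct (Tl_small u Hu (Su / 2304)) as [K HK]; [lra|]. specialize (HK K (le_n K)).
  pose proof (Tl_nonneg u Hu K) as HT.
  assert (HrsK : rs (fun n => u n ^ 2) 0 K = Su - Tl u K) by (unfold Tl; fold Su; ring).
  pose proof (E_low i0 c yv zv sv Bv H2 H4 H5a H5b H5c H6 H7 u K) as Elow.
  pose proof (fin_le fam _ (Bcat Bv K) (LFin u Hu) (fam_Bcat i0 c sv Bv H5a H5b H6 H7 K)) as Hle.
  pose proof (nu_minus (Vr yv u 0 K) (Lf yv u) (Bcat Bv K)) as Hm.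
  rewrite (nu_ext (fun w => Vr yv u 0 K w - Lf yv u w) (fun w => -1 * (Lf yv u w - Vr yv u 0 K w))) in Hm by (intros; ring).
  rewrite nu_scal in Hm. replace (Rabs (-1)) with 1 in Hm by (rewrite Rabs_left; lra).
  pose proof (L1' u Hu K (Bcat Bv K) (fam_Bcat i0 c sv Bv H5a H5b H6 H7 K)) as HL.
  assert (A1 : sqrt Su / 2 <= sqrt (rs (fun n => u n ^ 2) 0 K)).
  { apply le_sqrt_of_sq. pose proof (sqrt_pos Su); lra.
    replace ((sqrt Su / 2) ^ 2) with (sqrt Su ^ 2 / 4) by field. rewrite pow2_sqrt by auto. lra. }
  assert (A2 : sqrt (Tl u K) <= sqrt Su / 48).
  { apply sqrt_le_sq. pose proof (sqrt_pos Su); lra.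
    replace ((sqrt Su / 48) ^ 2) with (sqrt Su ^ 2 / 2304) by field. rewrite pow2_sqrt by auto. lra. }
  pose proof (sqrt_pos Su). lra.
Qed.

Theorem final : contains_l2 fam Y.
Proof.
  exists (fun u => Lf yv u). split; [|split; [|split]].
  - intros u Hu. apply LY; auto.
  - intros u v Hu Hv w. unfold Lf.
    rewrite (Series_ext _ (fun n => u n * yv n w + v n * yv n w)) by (intros; ring).
    apply Series_plus; apply (ex_pt i0 c yv zv sv H2 H3 H4 H6); auto.
  - intros r u Hu w. unfold Lf.
    rewrite (Series_ext _ (fun n => r * (u n * yv n w))) by (intros; ring). apply Series_scal_l.
  - exists (/ 16), 3. split; [lra|split; [lra|]]. intros u Hu. unfold norm2. split.
    + apply Llower; auto.
    + apply (bnd_fin fam famnil (Lf yv u) _ (Lbound u Hu)).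
Qed.
End FINAL.

Lemma dk_anti n k : (n <= k)%nat -> dk k <= dk n.
Proof.
  intros H. unfold dk. replace k with (n + (k - n))%nat by lia. rewrite pow_add.
  pose proof (half_pow_le (k - n)). pose proof (pow_lt (/2) n ltac:(lra)). nra.
Qed.

Theorem proposition4p4 :
  forall (W : Type) (lt : W -> W -> Prop), is_omega1 W lt ->
  forall (I J : Type) (i0 i1 : I), i0 <> i1 -> inhabited J ->
  forall c : W -> W -> I * J,
    sym_coloring c -> strong_T_coloring lt i0 i1 c ->
  forall Y : (W -> R) -> Prop,
    closed_subspace (T0_family i0 c) Y ->
    ~ separable_sub (T0_family i0 c) Y ->
    contains_l2 (T0_family i0 c) Y.
Proof.
  intros W lt Hw1 I J i0 i1 Hi01 HJ c csym [HT Hstrong] Y HY HNS.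
  destruct (classic (inhabited W)) as [[w0]|HnW].
  2:{ exfalso. apply (W_uncnt lt Hw1). exists (fun _ => 0%nat). intros x. exfalso. apply HnW. constructor. exact x. }
  assert (Hstr : forall A : W -> list W,
    (forall xi, A xi <> nil) ->
    (forall xi eta, xi <> eta -> forall a, In a (A xi) -> ~ In a (A eta)) ->
    exists xi eta, lt xi eta /\ c0_const_on c (A xi) (A eta) i0).
  { intros A HA HB. apply (proj1 (Hstrong A HA HB)). }
  destruct (construct lt Hw1 i0 c Y HY w0 HNS) as [Ob [HO1 HO2]].
  destruct (select lt Hw1 i0 c Y w0 Hstr Ob HO1 HO2) as [p [Hp1 Hp2]].
  set (ob := fun n => Ob (fst (p n)) (snd (p n))).
  assert (Hok : forall n, objok i0 c Y (ob n) (dk n)).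
  { intros n. destruct (HO1 (fst (p n)) (snd (p n))) as [A [B C]]. split; auto. split; auto.
    intros a Ha. eapply Rle_trans; [apply B; auto|]. apply dk_anti. apply Hp1. }
  assert (Hne : forall i j, i <> j -> p i <> p j).
  { intros i j Hij. destruct (Nat.lt_gt_cases i j) as [[L|L] _]; auto.
    - apply Hp2; auto.
    - intros E. apply (Hp2 j i L). auto. }
  apply (final i0 c Y HY (fun n => oy (ob n)) (fun n => oz (ob n)) (fun n => os (ob n)) (fun n => oB (ob n))).
  - intros n. apply (Hok n).
  - intros n. apply (Hok n).
  - intros n. apply (Hok n).
  - intros n. apply (Hok n).
  - intros n. apply (Hok n).
  - intros n. apply (Hok n).
  - intros n. apply (Hok n).
  - intros i j Hij. unfold ob. apply HO2.
    destruct (p i) as [xi k] eqn:Ei. destruct (p j) as [xi' k'] eqn:Ej. simpl.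
    destruct (classic (xi = xi')) as [->|H]; auto. right. intros ->. apply (Hne i j Hij). congruence.
  - intros i j Hij. unfold ob. destruct (Nat.lt_gt_cases i j) as [[L|L] _]; auto.
    + apply (Hp2 i j L).
    + intros a b Ha Hb. destruct (Hp2 j i L) as [_ Hc]. rewrite csym. apply Hc; auto.
Qed.
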